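(* There exist 4-GDDs of types $57^8 174^1$, $57^8 177^1$, $57^8 180^1$, $57^8 183^1$, $57^8 186^1$, $57^8 189^1$, $57^8 192^1$ and $57^8 195^1$.
   Context: A 4-GDD of type $g_1^{u_1}\cdots g_r^{u_r}$ is a triple $(V,\mathcal G,\mathcal B)$ where $V$ is a set of $u_1g_1+\cdots+u_rg_r$ points, $\mathcal G$ is a partition of $V$ into $u_i$ groups of size $g_i$ for each $i$, and $\mathcal B$ is a non-empty collection of 4-element subsets (blocks) such that every pair of points from distinct groups lies in exactly one block and no pair from the same group lies in any block. *)

(* Defs.v *)
From mathcomp Require Import all_boot.
Set Implicit Arguments. Unset Strict Implicit. Unset Printing Implicit Defensive.

Definition is_4GDD (V : finType) (G B : {set {set V}}) : Prop :=
  [/\ partition G [set: V],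
      B != set0,
      (forall b, b \in B -> #|b| = 4),
      (forall x y, pblock G x != pblock G y ->
         #|[set b in B | (x \in b) && (y \in b)]| = 1) &
      (forall x y, x != y -> pblock G x = pblock G y ->
         forall b, b \in B -> ~~ ((x \in b) && (y \in b)))].

(* The type of the GDD, as the multiset (list up to permutation) of
   group sizes: type g1^u1 ... gr^ur is the list with ui copies of gi. *)
Definition has_type (V : finType) (G : {set {set V}}) (t : seq nat) : Prop :=
  perm_eq [seq #|X : {set V}| | X <- enum (mem G)] t.

(* Main.v *)
Require Import Defs.
From mathcomp Require Import all_boot zify.
Set Implicit Arguments. Unset Strict Implicit. Unset Printing Implicit Defensive.

Definition grp (x : nat) : nat := if x < 456 then x %/ 57 else 8.
Definition tr (g x : nat) : nat :=
  if x < 456 then 57 * (x %/ 57) + (x %% 57 + g) %% 57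
  else 456 + 3 * ((x - 456) %/ 3) + ((x - 456) %% 3 + g) %% 3.
Definition keyf (x y : nat) : nat :=
  if y < 456 then (grp x * 8 + grp y) * 57 + (y %% 57 + 57 - x %% 57) %% 57
  else 3648 + (((y - 456) %/ 3) * 8 + grp x) * 3 + (x %% 57 + 3 - (y - 456) %% 3) %% 3.
Definition validk (J k : nat) : bool :=
  if k < 3648 then (k %/ 57) %/ 8 < (k %/ 57) %% 8 else k < 3648 + 24 * J.
Definition VK J := filter (validk J) (iota 0 (3648 + 24 * J)).
Fixpoint pairs (s : seq nat) : seq (nat * nat) :=
  if s is x :: s' then [seq (x, y) | y <- s'] ++ pairs s' else [::].
Definition BPt (bb : seq (seq nat)) : seq (nat * (nat * nat)) :=
  flatten [seq [seq (k, p) | p <- pairs (nth [::] bb k)] | k <- iota 0 (size bb)].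
Definition chk1 J (bb : seq (seq nat)) :=
  (0 < size bb) && all (fun b => (size b == 4) && all (fun x => x < 456 + 3 * J) b
                                 && sorted ltn (map grp b)) bb.
Definition chk2 J bb := sort leq [seq keyf p.2.1 p.2.2 | p <- BPt bb] == VK J.
Definition chk3 J := (0 < J) && ([seq count (fun x => grp x == i) (iota 0 (456 + 3 * J)) | i <- iota 0 9]
   == nseq 8 57 ++ [:: 3 * J]).

Lemma tr_small g x : (tr g x < 456) = (x < 456).
Proof. rewrite /tr; case: (ltnP x 456) => h; lia. Qed.
Lemma tr_grp g x : grp (tr g x) = grp x.
Proof. rewrite /grp tr_small; case: (ltnP x 456) => h //; rewrite /tr h; lia. Qed.
Lemma tr_lt J g x : x < 456 + 3 * J -> tr g x < 456 + 3 * J.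
Proof. rewrite /tr; case: ifP => h; lia. Qed.
Lemma key_tr g x y : x < 456 -> keyf (tr g x) (tr g y) = keyf x y.
Proof.
move=> hx; rewrite /keyf !tr_grp tr_small.
rewrite /tr hx; case: (ltnP y 456) => hy; lia.
Qed.
Lemma tr_inj_g g g' x : x < 456 -> g < 57 -> g' < 57 -> tr g x = tr g' x -> g = g'.
Proof. rewrite /tr => ->; lia. Qed.
Lemma grp_small x y : grp x < grp y -> x < 456.
Proof. rewrite /grp; case: ifP => //; case: ifP => //; lia. Qed.
Lemma grp_lt9 x : grp x < 9.
Proof. rewrite /grp; case: ifP => //; lia. Qed.

Lemma key_valid J x y : y < 456 + 3 * J -> grp x < grp y -> keyf x y \in VK J.
Proof.
move=> hy hg; have hx := grp_small hg.
move: hg; rewrite /VK mem_filter mem_iota /validk /keyf /grp hx.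
case: (ltnP y 456) => h1 hg.
- have -> : (x %/ 57 * 8 + y %/ 57) * 57 + (y %% 57 + 57 - x %% 57) %% 57 < 3648 by lia.
  apply/andP; split; [|lia].
  have -> : ((x %/ 57 * 8 + y %/ 57) * 57 + (y %% 57 + 57 - x %% 57) %% 57) %/ 57 = x %/ 57 * 8 + y %/ 57 by lia.
  have -> : (x %/ 57 * 8 + y %/ 57) %/ 8 = x %/ 57 by lia.
  have -> : (x %/ 57 * 8 + y %/ 57) %% 8 = y %/ 57 by lia.
  done.
- have -> : (3648 + ((y - 456) %/ 3 * 8 + x %/ 57) * 3 + (x %% 57 + 3 - (y - 456) %% 3) %% 3 < 3648) = false by lia.
  apply/andP; split; lia.
Qed.

Lemma key_eq J x y x' y' : y < 456 + 3 * J -> y' < 456 + 3 * J ->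
  grp x < grp y -> grp x' < grp y' -> keyf x y = keyf x' y' ->
  tr ((x %% 57 + 57 - x' %% 57) %% 57) x' = x /\ tr ((x %% 57 + 57 - x' %% 57) %% 57) y' = y.
Proof.
move=> hy hy' hg hg'; have hx := grp_small hg; have hx' := grp_small hg'.
move: hg hg'; rewrite /keyf /tr /grp hx hx'.
case: (ltnP y 456) => h1; case: (ltnP y' 456) => h2 hg hg' hk; split; lia.
Qed.

Lemma card_val n (P : pred nat) : #|[set v : 'I_n | P (val v)]| = count P (iota 0 n).
Proof.
rewrite cardsE cardE /enum_mem size_filter -enumT -val_enum_ord count_map.
by apply: eq_count => v.
Qed.
Lemma count_mem_iota n (s : seq nat) : uniq s -> all (fun x => x < n) s -> count (mem s) (iota 0 n) = size s.
Proof.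
move=> hu ha; rewrite -size_filter; apply: perm_size.
apply: uniq_perm; [by apply: filter_uniq; apply: iota_uniq | done | ].
move=> x; rewrite mem_filter mem_iota /=; case hx: (x \in s) => //=.
by move/allP: ha => /(_ x hx).
Qed.
Lemma inj_of_uniq_map (T1 T2 : eqType) (f : T1 -> T2) s a b :
  uniq (map f s) -> a \in s -> b \in s -> f a = f b -> a = b.
Proof.
elim: s => //= c s IH /andP[hn hu]; rewrite !inE => /orP[/eqP->|ha] /orP[/eqP->|hb] //= hf.
- by move: hn; rewrite hf (map_f f hb).
- by move: hn; rewrite -hf (map_f f ha).
- exact: IH.
Qed.

Lemma sorted_all s z : sorted ltn (map grp (z :: s)) -> all (fun w => grp z < grp w) s.
Proof.
move=> /= hp; have := order_path_min ltn_trans hp.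
by rewrite all_map.
Qed.

Lemma mem_pairs s x y : sorted ltn (map grp s) -> x \in s -> y \in s -> grp x < grp y -> (x, y) \in pairs s.
Proof.
elim: s => //= z s IH hs; have ha := sorted_all hs.
have hs' : sorted ltn (map grp s) by move: hs; rewrite /=; case: (map grp s) => //= a l /andP[].
rewrite !inE mem_cat => /orP[/eqP hx|hx] /orP[/eqP hy|hy] hg.
- by move: hg; rewrite hx hy ltnn.
- by apply/orP; left; rewrite hx; apply: map_f.
- by move/allP: ha => /(_ x hx); rewrite -hy; lia.
- by apply/orP; right; apply: IH.
Qed.

Lemma pairs_mem s x y : sorted ltn (map grp s) -> (x, y) \in pairs s -> [/\ x \in s, y \in s & grp x < grp y].
Proof.
elim: s => //= z s IH hs; have ha := sorted_all hs.
have hs' : sorted ltn (map grp s) by move: hs; rewrite /=; case: (map grp s) => //= a l /andP[].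
rewrite mem_cat => /orP[/mapP[w hw [-> ->]]|h].
- by rewrite !inE eqxx hw orbT; split => //; move/allP: ha => /(_ w hw).
- by case: (IH hs' h) => h1 h2 h3; rewrite !inE h1 h2 !orbT.
Qed.

Lemma BPt_mem bb k p : (k, p) \in BPt bb -> k < size bb /\ p \in pairs (nth [::] bb k).
Proof.
move=> /flatten_mapP[k' hk' /mapP[p' hp' [-> ->]]].
by move: hk'; rewrite mem_iota.
Qed.
Lemma mem_BPt bb k p : k < size bb -> p \in pairs (nth [::] bb k) -> (k, p) \in BPt bb.
Proof.
move=> hk hp; apply/flatten_mapP; exists k; first by rewrite mem_iota.
by apply: map_f.
Qed.
Definition Bs J (bb : seq (seq nat)) (k g : nat) : {set 'I_(456 + 3 * J)} :=
  [set v : 'I_(456 + 3 * J) | val v \in map (tr g) (nth [::] bb k)].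
Definition Bfam J bb : {set {set 'I_(456 + 3 * J)}} :=
  [set Bs J bb (val k) (val g) | k : 'I_(size bb), g : 'I_57].
Definition Gs J (i : nat) : {set 'I_(456 + 3 * J)} := [set v | grp (val v) == i].
Definition Gfam J : {set {set 'I_(456 + 3 * J)}} := [set Gs J (val i) | i : 'I_9].

Lemma blk_props J bb k : chk1 J bb -> k < size bb ->
  [/\ size (nth [::] bb k) = 4, all (fun x => x < 456 + 3 * J) (nth [::] bb k)
    & sorted ltn (map grp (nth [::] bb k))].
Proof.
move=> /andP[_ /allP h] hk; have := h _ (mem_nth [::] hk).
by case/andP => /andP[/eqP -> ->] ->.
Qed.

Lemma map_tr_grp g b : map grp (map (tr g) b) = map grp b.
Proof. by rewrite -map_comp; apply: eq_map => x; apply: tr_grp. Qed.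

Lemma uniq_grp (s : seq nat) : sorted ltn (map grp s) -> uniq (map grp s).
Proof. by apply: sorted_uniq; [apply: ltn_trans | move=> z; apply: ltnn]. Qed.

Lemma Bs_card J bb k g : chk1 J bb -> k < size bb -> #|Bs J bb k g| = 4.
Proof.
move=> h1 hk; have [hs ha hso] := blk_props h1 hk.
rewrite /Bs card_val count_mem_iota ?size_map //.
- apply: (@map_uniq _ _ grp); rewrite map_tr_grp; exact: uniq_grp.
- by rewrite all_map; apply/allP => x hx /=; apply: tr_lt; apply: (allP ha).
Qed.

Lemma chk3_count J i : chk3 J -> i < 9 -> 0 < count (fun x => grp x == i) (iota 0 (456 + 3 * J)).
Proof.
move=> /andP[hJ /eqP h] hi.
have e : nth 0 [seq count (fun x => grp x == i0) (iota 0 (456 + 3 * J)) | i0 <- iota 0 9] i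
   = nth 0 (nseq 8 57 ++ [:: 3 * J]) i by rewrite h.
rewrite (nth_map 0) in e; last by rewrite size_iota.
rewrite nth_iota in e; last by [].
rewrite add0n in e; rewrite e.
clear e h; by case: i hi => [|[|[|[|[|[|[|[|[|i]]]]]]]]] //= _; rewrite muln_gt0.
Qed.

Lemma Gs_nonempty J i : chk3 J -> i < 9 -> exists v, v \in Gs J i.
Proof.
move=> h hi; apply/card_gt0P; rewrite /Gs (card_val _ (fun x => grp x == i)); exact: chk3_count.
Qed.

Lemma G_triv J : trivIset (Gfam J).
Proof.
apply/trivIsetP => A B /imsetP[i _ ->] /imsetP[j _ ->] hne.
rewrite disjoint_subset; apply/subsetP => v; rewrite !inE => /eqP h1.
by apply/negP => /eqP h2; move: hne; rewrite -h1 -h2 eqxx.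
Qed.

Lemma Gs_in J (v : 'I_(456 + 3 * J)) : Gs J (grp v) \in Gfam J.
Proof. by apply/imsetP; exists (Ordinal (grp_lt9 v)). Qed.

Lemma G_cover J : cover (Gfam J) = [set: 'I_(456 + 3 * J)].
Proof.
apply/setP => v; rewrite inE; apply/bigcupP; exists (Gs J (grp v)); first exact: Gs_in.
by rewrite inE.
Qed.

Lemma pblockG J (v : 'I_(456 + 3 * J)) : pblock (Gfam J) v = Gs J (grp v).
Proof. by apply: def_pblock; [apply: G_triv | apply: Gs_in | rewrite inE]. Qed.

Lemma one_block J bb (x y : 'I_(456 + 3 * J)) : chk1 J bb -> chk2 J bb -> grp x < grp y ->
  #|[set b in Bfam J bb | (x \in b) && (y \in b)]| = 1.
Proof.
move=> h1 h2 hg.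
have hp : perm_eq [seq keyf p.2.1 p.2.2 | p <- BPt bb] (VK J).
  have := perm_sort leq [seq keyf p.2.1 p.2.2 | p <- BPt bb].
  move/permPl; rewrite (eqP h2) perm_sym; done.
have hu : uniq [seq keyf p.2.1 p.2.2 | p <- BPt bb].
  by rewrite (perm_uniq hp) /VK filter_uniq // iota_uniq.
have hk := key_valid (ltn_ord y) hg.
rewrite -(perm_mem hp) in hk.
case/mapP: hk => [[k [x0 y0]] hq /= hkey].
have [hks hpair] := BPt_mem hq.
have [hsz hall hsort] := blk_props h1 hks.
have [hx0 hy0 hg0] := pairs_mem hsort hpair.
have hy0n : y0 < 456 + 3 * J := allP hall y0 hy0.
have [ex ey] := key_eq (ltn_ord y) hy0n hg hg0 hkey.
set g := (x %% 57 + 57 - x0 %% 57) %% 57 in ex ey.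
have hg57 : g < 57 by rewrite /g ltn_pmod.
have hx0s : x0 < 456 := grp_small hg0.
apply/eqP/cards1P; exists (Bs J bb k g); apply/setP => b; rewrite !inE.
apply/idP/idP.
- case/andP => /imset2P[k' g' _ _ ->]; rewrite !inE => /andP[hxb hyb].
  case/mapP: hxb => x1 hx1 ex1; case/mapP: hyb => y1 hy1 ey1.
  have [hsz' hall' hsort'] := blk_props h1 (ltn_ord k').
  have hg1 : grp x1 < grp y1 by rewrite -(tr_grp g' x1) -(tr_grp g' y1) -ex1 -ey1.
  have hq1 : (val k', (x1, y1)) \in BPt bb.
    exact: (mem_BPt (ltn_ord k') (mem_pairs hsort' hx1 hy1 hg1)).
  have hkey1 : keyf x1 y1 = keyf x0 y0.
    by rewrite -(key_tr g' y1 (grp_small hg1)) -ex1 -ey1.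
  have := @inj_of_uniq_map _ _ (fun p : nat * (nat * nat) => keyf p.2.1 p.2.2) _ _ _ hu hq1 hq hkey1.
  case=> ek ex1' ey1'; subst x1 y1.
  have eg : val g' = g by apply: (tr_inj_g hx0s (ltn_ord g') hg57); rewrite -ex1 ex.
  by apply/eqP; congr (Bs J bb _ _).
- move/eqP => ->; apply/andP; split.
  + by apply/imset2P; exists (Ordinal hks) (Ordinal hg57).
  + by rewrite !inE; apply/andP; split; apply/mapP; [exists x0 | exists y0].
Qed.

Lemma no_same J bb (x y : 'I_(456 + 3 * J)) b : chk1 J bb -> x != y -> grp x = grp y ->
  b \in Bfam J bb -> ~~ ((x \in b) && (y \in b)).
Proof.
move=> h1 hne hg /imset2P[k g _ _ ->]; rewrite !inE; apply/negP => /andP[hx hy].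
have [hsz hall hsort] := blk_props h1 (ltn_ord k).
have hu : uniq (map grp (map (tr g) (nth [::] bb (val k)))) by rewrite map_tr_grp; apply: uniq_grp.
have := inj_of_uniq_map hu hx hy hg.
by move/val_inj => exy; move: hne; rewrite exy eqxx.
Qed.

Lemma Gs_inj J i j : chk3 J -> i < 9 -> Gs J i = Gs J j -> i = j.
Proof.
move=> h hi e; have [v hv] := Gs_nonempty h hi.
have hv' : v \in Gs J j by rewrite -e.
by move: hv hv'; rewrite !inE => /eqP <- /eqP.
Qed.

Theorem gen J bb : chk1 J bb -> chk2 J bb -> chk3 J ->
  exists (V : finType) (G B : {set {set V}}), is_4GDD G B /\ has_type G (nseq 8 57 ++ [:: 3 * J]).
Proof.
move=> h1 h2 h3.
exists 'I_(456 + 3 * J), (Gfam J), (Bfam J bb); split.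
- split.
  + rewrite /partition G_cover eqxx G_triv /=.
    apply/imsetP => -[i _ e].
    have [v hv] := Gs_nonempty h3 (ltn_ord i).
    by move: hv; rewrite -e inE.
  + apply/set0Pn; have hb : 0 < size bb by case/andP: h1.
    by exists (Bs J bb 0 0); apply/imset2P; exists (Ordinal hb) (Ordinal (isT : 0 < 57)).
  + by move=> b /imset2P[k g _ _ ->]; apply: (Bs_card _ h1 (ltn_ord k)).
  + move=> x y; rewrite !pblockG => hne.
    have hne' : grp x != grp y by apply: contra hne => /eqP ->.
    case: (ltngtP (grp x) (grp y)) hne' => // hlt _.
    * exact: one_block.
    * rewrite (_ : [set b in Bfam J bb | (x \in b) && (y \in b)] = [set b in Bfam J bb | (y \in b) && (x \in b)]).
        exact: one_block.
      by apply/setP => b; rewrite !in_set [(x \in b) && _]andbC.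
  + move=> x y hne; rewrite !pblockG => e b hb.
    have : x \in Gs J (grp y) by rewrite -e inE.
    rewrite inE => /eqP hxy.
    exact: (no_same h1 hne hxy hb).
- rewrite /has_type.
  have hpe : perm_eq (enum (mem (Gfam J))) [seq Gs J (val i) | i <- enum 'I_9].
    apply: uniq_perm; first exact: enum_uniq.
    + rewrite map_inj_uniq ?enum_uniq // => i j e.
      by apply: val_inj; apply: (Gs_inj h3 (ltn_ord i)).
    + move=> X; rewrite mem_enum; apply/imsetP/mapP => -[i hi ->]; exists i => //.
      by rewrite mem_enum.
  apply: (perm_trans (perm_map (fun X : {set 'I_(456 + 3 * J)} => #|X|) hpe)).
  have -> : map (fun X : {set 'I_(456 + 3 * J)} => #|X|) [seq Gs J (val i) | i <- enum 'I_9]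
          = [seq count (fun x => grp x == i) (iota 0 (456 + 3 * J)) | i <- iota 0 9].
    rewrite -[iota 0 9]val_enum_ord -!map_comp; apply: eq_map => i /=.
    by rewrite /Gs (card_val _ (fun x => grp x == i)).
  by case/andP: h3 => _ /eqP ->; apply: perm_refl.
Qed.

Definition bb58 : seq (seq nat) := [::
[:: 0; 140; 199; 456];
[:: 19; 176; 270; 456];
[:: 38; 61; 350; 456];
[:: 57; 207; 370; 456];
[:: 95; 271; 348; 456];
[:: 114; 317; 424; 456];
[:: 133; 306; 410; 456];
[:: 266; 301; 423; 456];
[:: 0; 164; 181; 459];
[:: 19; 185; 243; 459];
[:: 38; 91; 353; 459];
[:: 57; 192; 352; 459];
[:: 95; 280; 393; 459];
[:: 114; 329; 412; 459];
[:: 133; 321; 407; 459];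
[:: 266; 307; 432; 459];
[:: 57; 197; 256; 462];
[:: 76; 233; 327; 462];
[:: 8; 95; 118; 462];
[:: 28; 114; 264; 462];
[:: 6; 152; 328; 462];
[:: 171; 374; 424; 462];
[:: 190; 363; 410; 462];
[:: 323; 358; 423; 462];
[:: 57; 221; 238; 465];
[:: 76; 242; 300; 465];
[:: 11; 95; 148; 465];
[:: 10; 114; 249; 465];
[:: 51; 152; 337; 465];
[:: 171; 386; 412; 465];
[:: 190; 378; 407; 465];
[:: 323; 364; 432; 465];
[:: 114; 254; 313; 468];
[:: 133; 290; 384; 468];
[:: 65; 152; 175; 468];
[:: 85; 171; 321; 468];
[:: 63; 209; 385; 468];
[:: 32; 228; 424; 468];
[:: 21; 247; 410; 468];
[:: 16; 380; 423; 468];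
[:: 114; 278; 295; 471];
[:: 133; 299; 357; 471];
[:: 68; 152; 205; 471];
[:: 67; 171; 306; 471];
[:: 108; 209; 394; 471];
[:: 44; 228; 412; 471];
[:: 36; 247; 407; 471];
[:: 22; 380; 432; 471];
[:: 171; 311; 370; 474];
[:: 42; 190; 347; 474];
[:: 122; 209; 232; 474];
[:: 142; 228; 378; 474];
[:: 43; 120; 266; 474];
[:: 89; 285; 424; 474];
[:: 78; 304; 410; 474];
[:: 38; 73; 423; 474];
[:: 171; 335; 352; 477];
[:: 15; 190; 356; 477];
[:: 125; 209; 262; 477];
[:: 124; 228; 363; 477];
[:: 52; 165; 266; 477];
[:: 101; 285; 412; 477];
[:: 93; 304; 407; 477];
[:: 38; 79; 432; 477];
[:: 28; 228; 368; 480];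
[:: 5; 99; 247; 480];
[:: 179; 266; 289; 480];
[:: 36; 199; 285; 480];
[:: 100; 177; 323; 480];
[:: 146; 342; 424; 480];
[:: 135; 361; 410; 480];
[:: 95; 130; 423; 480];
[:: 10; 228; 392; 483];
[:: 14; 72; 247; 483];
[:: 182; 266; 319; 483];
[:: 21; 181; 285; 483];
[:: 109; 222; 323; 483];
[:: 158; 342; 412; 483];
[:: 150; 361; 407; 483];
[:: 95; 136; 432; 483];
[:: 26; 85; 285; 486];
[:: 62; 156; 304; 486];
[:: 236; 323; 346; 486];
[:: 93; 256; 342; 486];
[:: 157; 234; 380; 486];
[:: 0; 203; 424; 486];
[:: 19; 192; 410; 486];
[:: 152; 187; 423; 486];
[:: 50; 67; 285; 489];
[:: 71; 129; 304; 489];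
[:: 239; 323; 376; 489];
[:: 78; 238; 342; 489];
[:: 166; 279; 380; 489];
[:: 0; 215; 412; 489];
[:: 19; 207; 407; 489];
[:: 152; 193; 432; 489];
[:: 83; 142; 342; 492];
[:: 119; 213; 361; 492];
[:: 4; 293; 380; 492];
[:: 0; 150; 313; 492];
[:: 38; 214; 291; 492];
[:: 57; 260; 424; 492];
[:: 76; 249; 410; 492];
[:: 209; 244; 423; 492];
[:: 107; 124; 342; 495];
[:: 128; 186; 361; 495];
[:: 34; 296; 380; 495];
[:: 0; 135; 295; 495];
[:: 38; 223; 336; 495];
[:: 57; 272; 412; 495];
[:: 76; 264; 407; 495];
[:: 209; 250; 432; 495];
[:: 0; 182; 248; 498];
[:: 19; 62; 183; 498];
[:: 38; 388; 449; 498];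
[:: 57; 139; 345; 498];
[:: 76; 175; 344; 498];
[:: 114; 298; 426; 498];
[:: 152; 280; 330; 498];
[:: 228; 341; 439; 498];
[:: 0; 179; 284; 501];
[:: 19; 71; 216; 501];
[:: 38; 391; 425; 501];
[:: 57; 127; 396; 501];
[:: 76; 205; 359; 501];
[:: 114; 310; 429; 501];
[:: 152; 271; 297; 501];
[:: 228; 305; 454; 501];
[:: 57; 239; 305; 504];
[:: 76; 119; 240; 504];
[:: 46; 95; 449; 504];
[:: 3; 114; 196; 504];
[:: 2; 133; 232; 504];
[:: 171; 355; 426; 504];
[:: 209; 337; 387; 504];
[:: 285; 398; 439; 504];
[:: 57; 236; 341; 507];
[:: 76; 128; 273; 507];
[:: 49; 95; 425; 507];
[:: 54; 114; 184; 507];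
[:: 17; 133; 262; 507];
[:: 171; 367; 429; 507];
[:: 209; 328; 354; 507];
[:: 285; 362; 454; 507];
[:: 114; 296; 362; 510];
[:: 133; 176; 297; 510];
[:: 103; 152; 449; 510];
[:: 60; 171; 253; 510];
[:: 59; 190; 289; 510];
[:: 13; 228; 426; 510];
[:: 45; 266; 394; 510];
[:: 56; 342; 439; 510];
[:: 114; 293; 398; 513];
[:: 133; 185; 330; 513];
[:: 106; 152; 425; 513];
[:: 111; 171; 241; 513];
[:: 74; 190; 319; 513];
[:: 25; 228; 429; 513];
[:: 12; 266; 385; 513];
[:: 20; 342; 454; 513];
[:: 20; 171; 353; 516];
[:: 190; 233; 354; 516];
[:: 160; 209; 449; 516];
[:: 117; 228; 310; 516];
[:: 116; 247; 346; 516];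
[:: 70; 285; 426; 516];
[:: 52; 102; 323; 516];
[:: 0; 113; 439; 516];
[:: 56; 171; 350; 519];
[:: 190; 242; 387; 519];
[:: 163; 209; 425; 519];
[:: 168; 228; 298; 519];
[:: 131; 247; 376; 519];
[:: 82; 285; 429; 519];
[:: 43; 69; 323; 519];
[:: 0; 77; 454; 519];
[:: 11; 77; 228; 522];
[:: 12; 247; 290; 522];
[:: 217; 266; 449; 522];
[:: 174; 285; 367; 522];
[:: 4; 173; 304; 522];
[:: 127; 342; 426; 522];
[:: 109; 159; 380; 522];
[:: 57; 170; 439; 522];
[:: 8; 113; 228; 525];
[:: 45; 247; 299; 525];
[:: 220; 266; 425; 525];
[:: 225; 285; 355; 525];
[:: 34; 188; 304; 525];
[:: 139; 342; 429; 525];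
[:: 100; 126; 380; 525];
[:: 57; 134; 454; 525];
[:: 68; 134; 285; 528];
[:: 69; 304; 347; 528];
[:: 274; 323; 449; 528];
[:: 25; 231; 342; 528];
[:: 61; 230; 361; 528];
[:: 0; 184; 426; 528];
[:: 38; 166; 216; 528];
[:: 114; 227; 439; 528];
[:: 65; 170; 285; 531];
[:: 102; 304; 356; 531];
[:: 277; 323; 425; 531];
[:: 13; 282; 342; 531];
[:: 91; 245; 361; 531];
[:: 0; 196; 429; 531];
[:: 38; 157; 183; 531];
[:: 114; 191; 454; 531];
[:: 125; 191; 342; 534];
[:: 5; 126; 361; 534];
[:: 331; 380; 449; 534];
[:: 0; 82; 288; 534];
[:: 19; 118; 287; 534];
[:: 57; 241; 426; 534];
[:: 95; 223; 273; 534];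
[:: 171; 284; 439; 534];
[:: 122; 227; 342; 537];
[:: 14; 159; 361; 537];
[:: 334; 380; 425; 537];
[:: 0; 70; 339; 537];
[:: 19; 148; 302; 537];
[:: 57; 253; 429; 537];
[:: 95; 214; 240; 537];
[:: 171; 248; 454; 537];
[:: 0; 136; 385; 540];
[:: 19; 108; 137; 540];
[:: 38; 191; 313; 540];
[:: 76; 383; 455; 540];
[:: 95; 320; 444; 540];
[:: 114; 216; 283; 540];
[:: 190; 251; 421; 540];
[:: 228; 306; 348; 540];
[:: 0; 130; 394; 543];
[:: 19; 63; 167; 543];
[:: 38; 227; 295; 543];
[:: 76; 377; 419; 543];
[:: 95; 326; 411; 543];
[:: 114; 183; 268; 543];
[:: 190; 281; 415; 543];
[:: 228; 321; 393; 543];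
[:: 43; 57; 193; 546];
[:: 76; 165; 194; 546];
[:: 95; 248; 370; 546];
[:: 41; 133; 455; 546];
[:: 152; 377; 444; 546];
[:: 171; 273; 340; 546];
[:: 247; 308; 421; 546];
[:: 6; 285; 363; 546];
[:: 52; 57; 187; 549];
[:: 76; 120; 224; 549];
[:: 95; 284; 352; 549];
[:: 35; 133; 419; 549];
[:: 152; 383; 411; 549];
[:: 171; 240; 325; 549];
[:: 247; 338; 415; 549];
[:: 51; 285; 378; 549];
[:: 100; 114; 250; 552];
[:: 133; 222; 251; 552];
[:: 28; 152; 305; 552];
[:: 98; 190; 455; 552];
[:: 35; 209; 444; 552];
[:: 228; 330; 397; 552];
[:: 304; 365; 421; 552];
[:: 21; 63; 342; 552];
[:: 109; 114; 244; 555];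
[:: 133; 177; 281; 555];
[:: 10; 152; 341; 555];
[:: 92; 190; 419; 555];
[:: 41; 209; 411; 555];
[:: 228; 297; 382; 555];
[:: 304; 395; 415; 555];
[:: 36; 108; 342; 555];
[:: 157; 171; 307; 558];
[:: 190; 279; 308; 558];
[:: 85; 209; 362; 558];
[:: 155; 247; 455; 558];
[:: 92; 266; 444; 558];
[:: 55; 285; 387; 558];
[:: 23; 361; 421; 558];
[:: 0; 78; 120; 558];
[:: 166; 171; 301; 561];
[:: 190; 234; 338; 561];
[:: 67; 209; 398; 561];
[:: 149; 247; 419; 561];
[:: 98; 266; 411; 561];
[:: 40; 285; 354; 561];
[:: 53; 361; 415; 561];
[:: 0; 93; 165; 561];
[:: 214; 228; 364; 564];
[:: 247; 336; 365; 564];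
[:: 20; 142; 266; 564];
[:: 212; 304; 455; 564];
[:: 149; 323; 444; 564];
[:: 45; 112; 342; 564];
[:: 19; 80; 421; 564];
[:: 57; 135; 177; 564];
[:: 223; 228; 358; 567];
[:: 247; 291; 395; 567];
[:: 56; 124; 266; 567];
[:: 206; 304; 419; 567];
[:: 155; 323; 411; 567];
[:: 12; 97; 342; 567];
[:: 19; 110; 415; 567];
[:: 57; 150; 222; 567];
[:: 22; 271; 285; 570];
[:: 23; 304; 393; 570];
[:: 77; 199; 323; 570];
[:: 269; 361; 455; 570];
[:: 206; 380; 444; 570];
[:: 0; 102; 169; 570];
[:: 76; 137; 421; 570];
[:: 114; 192; 234; 570];
[:: 16; 280; 285; 573];
[:: 53; 304; 348; 573];
[:: 113; 181; 323; 573];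
[:: 263; 361; 419; 573];
[:: 212; 380; 411; 573];
[:: 0; 69; 154; 573];
[:: 76; 167; 415; 573];
[:: 114; 207; 279; 573];
[:: 79; 328; 342; 576];
[:: 51; 80; 361; 576];
[:: 134; 256; 380; 576];
[:: 19; 326; 455; 576];
[:: 38; 263; 444; 576];
[:: 57; 159; 226; 576];
[:: 133; 194; 421; 576];
[:: 171; 249; 291; 576];
[:: 73; 337; 342; 579];
[:: 6; 110; 361; 579];
[:: 170; 238; 380; 579];
[:: 19; 320; 419; 579];
[:: 38; 269; 411; 579];
[:: 57; 126; 211; 579];
[:: 133; 224; 415; 579];
[:: 171; 264; 336; 579];
[:: 0; 309; 447; 582];
[:: 19; 280; 385; 582];
[:: 38; 77; 335; 582];
[:: 57; 347; 422; 582];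
[:: 76; 172; 313; 582];
[:: 114; 174; 357; 582];
[:: 133; 236; 424; 582];
[:: 152; 215; 279; 582];
[:: 0; 318; 408; 585];
[:: 19; 271; 394; 585];
[:: 38; 113; 311; 585];
[:: 57; 356; 452; 585];
[:: 76; 208; 295; 585];
[:: 114; 225; 384; 585];
[:: 133; 239; 412; 585];
[:: 152; 203; 234; 585];
[:: 57; 366; 447; 588];
[:: 43; 76; 337; 588];
[:: 95; 134; 392; 588];
[:: 5; 114; 422; 588];
[:: 133; 229; 370; 588];
[:: 15; 171; 231; 588];
[:: 190; 293; 424; 588];
[:: 209; 272; 336; 588];
[:: 57; 375; 408; 591];
[:: 52; 76; 328; 591];
[:: 95; 170; 368; 591];
[:: 14; 114; 452; 591];
[:: 133; 265; 352; 591];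
[:: 42; 171; 282; 591];
[:: 190; 296; 412; 591];
[:: 209; 260; 291; 591];
[:: 24; 114; 447; 594];
[:: 100; 133; 394; 594];
[:: 50; 152; 191; 594];
[:: 62; 171; 422; 594];
[:: 28; 190; 286; 594];
[:: 72; 228; 288; 594];
[:: 247; 350; 424; 594];
[:: 266; 329; 393; 594];
[:: 33; 114; 408; 597];
[:: 109; 133; 385; 597];
[:: 26; 152; 227; 597];
[:: 71; 171; 452; 597];
[:: 10; 190; 322; 597];
[:: 99; 228; 339; 597];
[:: 247; 353; 412; 597];
[:: 266; 317; 348; 597];
[:: 81; 171; 447; 600];
[:: 52; 157; 190; 600];
[:: 107; 209; 248; 600];
[:: 119; 228; 422; 600];
[:: 85; 247; 343; 600];
[:: 129; 285; 345; 600];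
[:: 8; 304; 424; 600];
[:: 51; 323; 386; 600];
[:: 90; 171; 408; 603];
[:: 43; 166; 190; 603];
[:: 83; 209; 284; 603];
[:: 128; 228; 452; 603];
[:: 67; 247; 379; 603];
[:: 156; 285; 396; 603];
[:: 11; 304; 412; 603];
[:: 6; 323; 374; 603];
[:: 138; 228; 447; 606];
[:: 109; 214; 247; 606];
[:: 164; 266; 305; 606];
[:: 176; 285; 422; 606];
[:: 1; 142; 304; 606];
[:: 3; 186; 342; 606];
[:: 65; 361; 424; 606];
[:: 44; 108; 380; 606];
[:: 147; 228; 408; 609];
[:: 100; 223; 247; 609];
[:: 140; 266; 341; 609];
[:: 185; 285; 452; 609];
[:: 37; 124; 304; 609];
[:: 54; 213; 342; 609];
[:: 68; 361; 412; 609];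
[:: 32; 63; 380; 609];
[:: 195; 285; 447; 612];
[:: 166; 271; 304; 612];
[:: 221; 323; 362; 612];
[:: 233; 342; 422; 612];
[:: 58; 199; 361; 612];
[:: 0; 60; 243; 612];
[:: 19; 122; 424; 612];
[:: 38; 101; 165; 612];
[:: 204; 285; 408; 615];
[:: 157; 280; 304; 615];
[:: 197; 323; 398; 615];
[:: 242; 342; 452; 615];
[:: 94; 181; 361; 615];
[:: 0; 111; 270; 615];
[:: 19; 125; 412; 615];
[:: 38; 89; 120; 615];
[:: 252; 342; 447; 618];
[:: 223; 328; 361; 618];
[:: 20; 278; 380; 618];
[:: 0; 290; 422; 618];
[:: 19; 115; 256; 618];
[:: 57; 117; 300; 618];
[:: 76; 179; 424; 618];
[:: 95; 158; 222; 618];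
[:: 261; 342; 408; 621];
[:: 214; 337; 361; 621];
[:: 56; 254; 380; 621];
[:: 0; 299; 452; 621];
[:: 19; 151; 238; 621];
[:: 57; 168; 327; 621];
[:: 76; 182; 412; 621];
[:: 95; 146; 177; 621];
[:: 95; 152; 342; 624];
[:: 133; 361; 399; 624];
[:: 38; 76; 190; 624];
[:: 0; 57; 380; 624];
[:: 19; 323; 437; 624];
[:: 209; 228; 304; 624];
[:: 247; 285; 418; 624];
[:: 114; 171; 266; 624];
[:: 57; 209; 399; 627];
[:: 190; 342; 418; 627];
[:: 228; 380; 437; 627];
[:: 95; 171; 285; 627];
[:: 76; 152; 266; 627];
[:: 0; 323; 361; 627];
[:: 19; 133; 304; 627];
[:: 38; 114; 247; 627];
[:: 114; 179; 370; 443];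
[:: 114; 182; 352; 431];
[:: 28; 171; 236; 443];
[:: 10; 171; 239; 431];
[:: 85; 228; 293; 443];
[:: 67; 228; 296; 431];
[:: 142; 285; 350; 443];
[:: 124; 285; 353; 431];
[:: 8; 199; 342; 443];
[:: 11; 181; 342; 431];
[:: 0; 65; 256; 443];
[:: 0; 68; 238; 431];
[:: 57; 122; 313; 443];
[:: 57; 125; 295; 431];
[:: 0; 115; 212; 377];
[:: 0; 151; 206; 383];
[:: 35; 57; 172; 269];
[:: 41; 57; 208; 263];
[:: 92; 114; 229; 326];
[:: 98; 114; 265; 320];
[:: 149; 171; 286; 383];
[:: 155; 171; 322; 377];
[:: 41; 206; 228; 343];
[:: 35; 212; 228; 379];
[:: 1; 98; 263; 285];
[:: 37; 92; 269; 285];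
[:: 58; 155; 320; 342];
[:: 94; 149; 326; 342];
[:: 57; 152; 285; 437];
[:: 0; 76; 247; 437];
[:: 0; 152; 190; 399];
[:: 57; 266; 323; 342];
[:: 0; 171; 228; 342];
[:: 114; 190; 323; 380]].

Lemma c58_1 : chk1 58 bb58. Proof. by vm_compute. Qed.
Lemma c58_2 : chk2 58 bb58. Proof. by vm_compute. Qed.
Lemma c58_3 : chk3 58. Proof. by vm_compute. Qed.
Lemma ex174 : exists (V : finType) (G B : {set {set V}}), is_4GDD G B /\ has_type G (nseq 8 57 ++ [:: 174]).
Proof. exact: (gen c58_1 c58_2 c58_3). Qed.

Definition bb59 : seq (seq nat) := [::
[:: 0; 140; 199; 456];
[:: 19; 176; 270; 456];
[:: 38; 61; 350; 456];
[:: 57; 207; 370; 456];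
[:: 95; 271; 348; 456];
[:: 114; 317; 424; 456];
[:: 133; 306; 410; 456];
[:: 266; 301; 423; 456];
[:: 0; 164; 181; 459];
[:: 19; 185; 243; 459];
[:: 38; 91; 353; 459];
[:: 57; 192; 352; 459];
[:: 95; 280; 393; 459];
[:: 114; 329; 412; 459];
[:: 133; 321; 407; 459];
[:: 266; 307; 432; 459];
[:: 57; 197; 256; 462];
[:: 76; 233; 327; 462];
[:: 8; 95; 118; 462];
[:: 28; 114; 264; 462];
[:: 6; 152; 328; 462];
[:: 171; 374; 424; 462];
[:: 190; 363; 410; 462];
[:: 323; 358; 423; 462];
[:: 57; 221; 238; 465];
[:: 76; 242; 300; 465];
[:: 11; 95; 148; 465];
[:: 10; 114; 249; 465];
[:: 51; 152; 337; 465];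
[:: 171; 386; 412; 465];
[:: 190; 378; 407; 465];
[:: 323; 364; 432; 465];
[:: 114; 254; 313; 468];
[:: 133; 290; 384; 468];
[:: 65; 152; 175; 468];
[:: 85; 171; 321; 468];
[:: 63; 209; 385; 468];
[:: 32; 228; 424; 468];
[:: 21; 247; 410; 468];
[:: 16; 380; 423; 468];
[:: 114; 278; 295; 471];
[:: 133; 299; 357; 471];
[:: 68; 152; 205; 471];
[:: 67; 171; 306; 471];
[:: 108; 209; 394; 471];
[:: 44; 228; 412; 471];
[:: 36; 247; 407; 471];
[:: 22; 380; 432; 471];
[:: 171; 311; 370; 474];
[:: 42; 190; 347; 474];
[:: 122; 209; 232; 474];
[:: 142; 228; 378; 474];
[:: 43; 120; 266; 474];
[:: 89; 285; 424; 474];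
[:: 78; 304; 410; 474];
[:: 38; 73; 423; 474];
[:: 171; 335; 352; 477];
[:: 15; 190; 356; 477];
[:: 125; 209; 262; 477];
[:: 124; 228; 363; 477];
[:: 52; 165; 266; 477];
[:: 101; 285; 412; 477];
[:: 93; 304; 407; 477];
[:: 38; 79; 432; 477];
[:: 28; 228; 368; 480];
[:: 5; 99; 247; 480];
[:: 179; 266; 289; 480];
[:: 36; 199; 285; 480];
[:: 100; 177; 323; 480];
[:: 146; 342; 424; 480];
[:: 135; 361; 410; 480];
[:: 95; 130; 423; 480];
[:: 10; 228; 392; 483];
[:: 14; 72; 247; 483];
[:: 182; 266; 319; 483];
[:: 21; 181; 285; 483];
[:: 109; 222; 323; 483];
[:: 158; 342; 412; 483];
[:: 150; 361; 407; 483];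
[:: 95; 136; 432; 483];
[:: 26; 85; 285; 486];
[:: 62; 156; 304; 486];
[:: 236; 323; 346; 486];
[:: 93; 256; 342; 486];
[:: 157; 234; 380; 486];
[:: 0; 203; 424; 486];
[:: 19; 192; 410; 486];
[:: 152; 187; 423; 486];
[:: 50; 67; 285; 489];
[:: 71; 129; 304; 489];
[:: 239; 323; 376; 489];
[:: 78; 238; 342; 489];
[:: 166; 279; 380; 489];
[:: 0; 215; 412; 489];
[:: 19; 207; 407; 489];
[:: 152; 193; 432; 489];
[:: 83; 142; 342; 492];
[:: 119; 213; 361; 492];
[:: 4; 293; 380; 492];
[:: 0; 150; 313; 492];
[:: 38; 214; 291; 492];
[:: 57; 260; 424; 492];
[:: 76; 249; 410; 492];
[:: 209; 244; 423; 492];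
[:: 107; 124; 342; 495];
[:: 128; 186; 361; 495];
[:: 34; 296; 380; 495];
[:: 0; 135; 295; 495];
[:: 38; 223; 336; 495];
[:: 57; 272; 412; 495];
[:: 76; 264; 407; 495];
[:: 209; 250; 432; 495];
[:: 0; 182; 248; 498];
[:: 19; 62; 183; 498];
[:: 38; 388; 449; 498];
[:: 57; 139; 345; 498];
[:: 76; 175; 344; 498];
[:: 114; 298; 426; 498];
[:: 152; 280; 330; 498];
[:: 228; 341; 439; 498];
[:: 0; 179; 284; 501];
[:: 19; 71; 216; 501];
[:: 38; 391; 425; 501];
[:: 57; 127; 396; 501];
[:: 76; 205; 359; 501];
[:: 114; 310; 429; 501];
[:: 152; 271; 297; 501];
[:: 228; 305; 454; 501];
[:: 57; 239; 305; 504];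
[:: 76; 119; 240; 504];
[:: 46; 95; 449; 504];
[:: 3; 114; 196; 504];
[:: 2; 133; 232; 504];
[:: 171; 355; 426; 504];
[:: 209; 337; 387; 504];
[:: 285; 398; 439; 504];
[:: 57; 236; 341; 507];
[:: 76; 128; 273; 507];
[:: 49; 95; 425; 507];
[:: 54; 114; 184; 507];
[:: 17; 133; 262; 507];
[:: 171; 367; 429; 507];
[:: 209; 328; 354; 507];
[:: 285; 362; 454; 507];
[:: 114; 296; 362; 510];
[:: 133; 176; 297; 510];
[:: 103; 152; 449; 510];
[:: 60; 171; 253; 510];
[:: 59; 190; 289; 510];
[:: 13; 228; 426; 510];
[:: 45; 266; 394; 510];
[:: 56; 342; 439; 510];
[:: 114; 293; 398; 513];
[:: 133; 185; 330; 513];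
[:: 106; 152; 425; 513];
[:: 111; 171; 241; 513];
[:: 74; 190; 319; 513];
[:: 25; 228; 429; 513];
[:: 12; 266; 385; 513];
[:: 20; 342; 454; 513];
[:: 20; 171; 353; 516];
[:: 190; 233; 354; 516];
[:: 160; 209; 449; 516];
[:: 117; 228; 310; 516];
[:: 116; 247; 346; 516];
[:: 70; 285; 426; 516];
[:: 52; 102; 323; 516];
[:: 0; 113; 439; 516];
[:: 56; 171; 350; 519];
[:: 190; 242; 387; 519];
[:: 163; 209; 425; 519];
[:: 168; 228; 298; 519];
[:: 131; 247; 376; 519];
[:: 82; 285; 429; 519];
[:: 43; 69; 323; 519];
[:: 0; 77; 454; 519];
[:: 11; 77; 228; 522];
[:: 12; 247; 290; 522];
[:: 217; 266; 449; 522];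
[:: 174; 285; 367; 522];
[:: 4; 173; 304; 522];
[:: 127; 342; 426; 522];
[:: 109; 159; 380; 522];
[:: 57; 170; 439; 522];
[:: 8; 113; 228; 525];
[:: 45; 247; 299; 525];
[:: 220; 266; 425; 525];
[:: 225; 285; 355; 525];
[:: 34; 188; 304; 525];
[:: 139; 342; 429; 525];
[:: 100; 126; 380; 525];
[:: 57; 134; 454; 525];
[:: 68; 134; 285; 528];
[:: 69; 304; 347; 528];
[:: 274; 323; 449; 528];
[:: 25; 231; 342; 528];
[:: 61; 230; 361; 528];
[:: 0; 184; 426; 528];
[:: 38; 166; 216; 528];
[:: 114; 227; 439; 528];
[:: 65; 170; 285; 531];
[:: 102; 304; 356; 531];
[:: 277; 323; 425; 531];
[:: 13; 282; 342; 531];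
[:: 91; 245; 361; 531];
[:: 0; 196; 429; 531];
[:: 38; 157; 183; 531];
[:: 114; 191; 454; 531];
[:: 125; 191; 342; 534];
[:: 5; 126; 361; 534];
[:: 331; 380; 449; 534];
[:: 0; 82; 288; 534];
[:: 19; 118; 287; 534];
[:: 57; 241; 426; 534];
[:: 95; 223; 273; 534];
[:: 171; 284; 439; 534];
[:: 122; 227; 342; 537];
[:: 14; 159; 361; 537];
[:: 334; 380; 425; 537];
[:: 0; 70; 339; 537];
[:: 19; 148; 302; 537];
[:: 57; 253; 429; 537];
[:: 95; 214; 240; 537];
[:: 171; 248; 454; 537];
[:: 0; 136; 385; 540];
[:: 19; 108; 137; 540];
[:: 38; 191; 313; 540];
[:: 76; 383; 455; 540];
[:: 95; 320; 444; 540];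
[:: 114; 216; 283; 540];
[:: 190; 251; 421; 540];
[:: 228; 306; 348; 540];
[:: 0; 130; 394; 543];
[:: 19; 63; 167; 543];
[:: 38; 227; 295; 543];
[:: 76; 377; 419; 543];
[:: 95; 326; 411; 543];
[:: 114; 183; 268; 543];
[:: 190; 281; 415; 543];
[:: 228; 321; 393; 543];
[:: 43; 57; 193; 546];
[:: 76; 165; 194; 546];
[:: 95; 248; 370; 546];
[:: 41; 133; 455; 546];
[:: 152; 377; 444; 546];
[:: 171; 273; 340; 546];
[:: 247; 308; 421; 546];
[:: 6; 285; 363; 546];
[:: 52; 57; 187; 549];
[:: 76; 120; 224; 549];
[:: 95; 284; 352; 549];
[:: 35; 133; 419; 549];
[:: 152; 383; 411; 549];
[:: 171; 240; 325; 549];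
[:: 247; 338; 415; 549];
[:: 51; 285; 378; 549];
[:: 100; 114; 250; 552];
[:: 133; 222; 251; 552];
[:: 28; 152; 305; 552];
[:: 98; 190; 455; 552];
[:: 35; 209; 444; 552];
[:: 228; 330; 397; 552];
[:: 304; 365; 421; 552];
[:: 21; 63; 342; 552];
[:: 109; 114; 244; 555];
[:: 133; 177; 281; 555];
[:: 10; 152; 341; 555];
[:: 92; 190; 419; 555];
[:: 41; 209; 411; 555];
[:: 228; 297; 382; 555];
[:: 304; 395; 415; 555];
[:: 36; 108; 342; 555];
[:: 157; 171; 307; 558];
[:: 190; 279; 308; 558];
[:: 85; 209; 362; 558];
[:: 155; 247; 455; 558];
[:: 92; 266; 444; 558];
[:: 55; 285; 387; 558];
[:: 23; 361; 421; 558];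
[:: 0; 78; 120; 558];
[:: 166; 171; 301; 561];
[:: 190; 234; 338; 561];
[:: 67; 209; 398; 561];
[:: 149; 247; 419; 561];
[:: 98; 266; 411; 561];
[:: 40; 285; 354; 561];
[:: 53; 361; 415; 561];
[:: 0; 93; 165; 561];
[:: 214; 228; 364; 564];
[:: 247; 336; 365; 564];
[:: 20; 142; 266; 564];
[:: 212; 304; 455; 564];
[:: 149; 323; 444; 564];
[:: 45; 112; 342; 564];
[:: 19; 80; 421; 564];
[:: 57; 135; 177; 564];
[:: 223; 228; 358; 567];
[:: 247; 291; 395; 567];
[:: 56; 124; 266; 567];
[:: 206; 304; 419; 567];
[:: 155; 323; 411; 567];
[:: 12; 97; 342; 567];
[:: 19; 110; 415; 567];
[:: 57; 150; 222; 567];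
[:: 22; 271; 285; 570];
[:: 23; 304; 393; 570];
[:: 77; 199; 323; 570];
[:: 269; 361; 455; 570];
[:: 206; 380; 444; 570];
[:: 0; 102; 169; 570];
[:: 76; 137; 421; 570];
[:: 114; 192; 234; 570];
[:: 16; 280; 285; 573];
[:: 53; 304; 348; 573];
[:: 113; 181; 323; 573];
[:: 263; 361; 419; 573];
[:: 212; 380; 411; 573];
[:: 0; 69; 154; 573];
[:: 76; 167; 415; 573];
[:: 114; 207; 279; 573];
[:: 79; 328; 342; 576];
[:: 51; 80; 361; 576];
[:: 134; 256; 380; 576];
[:: 19; 326; 455; 576];
[:: 38; 263; 444; 576];
[:: 57; 159; 226; 576];
[:: 133; 194; 421; 576];
[:: 171; 249; 291; 576];
[:: 73; 337; 342; 579];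
[:: 6; 110; 361; 579];
[:: 170; 238; 380; 579];
[:: 19; 320; 419; 579];
[:: 38; 269; 411; 579];
[:: 57; 126; 211; 579];
[:: 133; 224; 415; 579];
[:: 171; 264; 336; 579];
[:: 0; 309; 447; 582];
[:: 19; 280; 385; 582];
[:: 38; 77; 335; 582];
[:: 57; 347; 422; 582];
[:: 76; 172; 313; 582];
[:: 114; 174; 357; 582];
[:: 133; 236; 424; 582];
[:: 152; 215; 279; 582];
[:: 0; 318; 408; 585];
[:: 19; 271; 394; 585];
[:: 38; 113; 311; 585];
[:: 57; 356; 452; 585];
[:: 76; 208; 295; 585];
[:: 114; 225; 384; 585];
[:: 133; 239; 412; 585];
[:: 152; 203; 234; 585];
[:: 57; 366; 447; 588];
[:: 43; 76; 337; 588];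
[:: 95; 134; 392; 588];
[:: 5; 114; 422; 588];
[:: 133; 229; 370; 588];
[:: 15; 171; 231; 588];
[:: 190; 293; 424; 588];
[:: 209; 272; 336; 588];
[:: 57; 375; 408; 591];
[:: 52; 76; 328; 591];
[:: 95; 170; 368; 591];
[:: 14; 114; 452; 591];
[:: 133; 265; 352; 591];
[:: 42; 171; 282; 591];
[:: 190; 296; 412; 591];
[:: 209; 260; 291; 591];
[:: 24; 114; 447; 594];
[:: 100; 133; 394; 594];
[:: 50; 152; 191; 594];
[:: 62; 171; 422; 594];
[:: 28; 190; 286; 594];
[:: 72; 228; 288; 594];
[:: 247; 350; 424; 594];
[:: 266; 329; 393; 594];
[:: 33; 114; 408; 597];
[:: 109; 133; 385; 597];
[:: 26; 152; 227; 597];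
[:: 71; 171; 452; 597];
[:: 10; 190; 322; 597];
[:: 99; 228; 339; 597];
[:: 247; 353; 412; 597];
[:: 266; 317; 348; 597];
[:: 81; 171; 447; 600];
[:: 52; 157; 190; 600];
[:: 107; 209; 248; 600];
[:: 119; 228; 422; 600];
[:: 85; 247; 343; 600];
[:: 129; 285; 345; 600];
[:: 8; 304; 424; 600];
[:: 51; 323; 386; 600];
[:: 90; 171; 408; 603];
[:: 43; 166; 190; 603];
[:: 83; 209; 284; 603];
[:: 128; 228; 452; 603];
[:: 67; 247; 379; 603];
[:: 156; 285; 396; 603];
[:: 11; 304; 412; 603];
[:: 6; 323; 374; 603];
[:: 138; 228; 447; 606];
[:: 109; 214; 247; 606];
[:: 164; 266; 305; 606];
[:: 176; 285; 422; 606];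
[:: 1; 142; 304; 606];
[:: 3; 186; 342; 606];
[:: 65; 361; 424; 606];
[:: 44; 108; 380; 606];
[:: 147; 228; 408; 609];
[:: 100; 223; 247; 609];
[:: 140; 266; 341; 609];
[:: 185; 285; 452; 609];
[:: 37; 124; 304; 609];
[:: 54; 213; 342; 609];
[:: 68; 361; 412; 609];
[:: 32; 63; 380; 609];
[:: 195; 285; 447; 612];
[:: 166; 271; 304; 612];
[:: 221; 323; 362; 612];
[:: 233; 342; 422; 612];
[:: 58; 199; 361; 612];
[:: 0; 60; 243; 612];
[:: 19; 122; 424; 612];
[:: 38; 101; 165; 612];
[:: 204; 285; 408; 615];
[:: 157; 280; 304; 615];
[:: 197; 323; 398; 615];
[:: 242; 342; 452; 615];
[:: 94; 181; 361; 615];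
[:: 0; 111; 270; 615];
[:: 19; 125; 412; 615];
[:: 38; 89; 120; 615];
[:: 252; 342; 447; 618];
[:: 223; 328; 361; 618];
[:: 20; 278; 380; 618];
[:: 0; 290; 422; 618];
[:: 19; 115; 256; 618];
[:: 57; 117; 300; 618];
[:: 76; 179; 424; 618];
[:: 95; 158; 222; 618];
[:: 261; 342; 408; 621];
[:: 214; 337; 361; 621];
[:: 56; 254; 380; 621];
[:: 0; 299; 452; 621];
[:: 19; 151; 238; 621];
[:: 57; 168; 327; 621];
[:: 76; 182; 412; 621];
[:: 95; 146; 177; 621];
[:: 114; 266; 342; 624];
[:: 133; 209; 247; 624];
[:: 57; 152; 304; 624];
[:: 0; 285; 437; 624];
[:: 38; 190; 399; 624];
[:: 76; 171; 361; 624];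
[:: 19; 380; 418; 624];
[:: 95; 228; 323; 624];
[:: 0; 152; 342; 627];
[:: 133; 266; 418; 627];
[:: 114; 209; 437; 627];
[:: 57; 380; 399; 627];
[:: 38; 76; 228; 627];
[:: 190; 285; 361; 627];
[:: 19; 247; 323; 627];
[:: 95; 171; 304; 627];
[:: 0; 133; 323; 630];
[:: 114; 285; 380; 630];
[:: 76; 152; 399; 630];
[:: 190; 304; 437; 630];
[:: 209; 266; 361; 630];
[:: 57; 228; 418; 630];
[:: 19; 95; 342; 630];
[:: 38; 171; 247; 630];
[:: 114; 179; 370; 443];
[:: 114; 182; 352; 431];
[:: 28; 171; 236; 443];
[:: 10; 171; 239; 431];
[:: 85; 228; 293; 443];
[:: 67; 228; 296; 431];
[:: 142; 285; 350; 443];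
[:: 124; 285; 353; 431];
[:: 8; 199; 342; 443];
[:: 11; 181; 342; 431];
[:: 0; 65; 256; 443];
[:: 0; 68; 238; 431];
[:: 57; 122; 313; 443];
[:: 57; 125; 295; 431];
[:: 0; 115; 212; 377];
[:: 0; 151; 206; 383];
[:: 35; 57; 172; 269];
[:: 41; 57; 208; 263];
[:: 92; 114; 229; 326];
[:: 98; 114; 265; 320];
[:: 149; 171; 286; 383];
[:: 155; 171; 322; 377];
[:: 41; 206; 228; 343];
[:: 35; 212; 228; 379];
[:: 1; 98; 263; 285];
[:: 37; 92; 269; 285];
[:: 58; 155; 320; 342];
[:: 94; 149; 326; 342];
[:: 0; 57; 114; 171];
[:: 228; 285; 342; 399]].

Lemma c59_1 : chk1 59 bb59. Proof. by vm_compute. Qed.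
Lemma c59_2 : chk2 59 bb59. Proof. by vm_compute. Qed.
Lemma c59_3 : chk3 59. Proof. by vm_compute. Qed.
Lemma ex177 : exists (V : finType) (G B : {set {set V}}), is_4GDD G B /\ has_type G (nseq 8 57 ++ [:: 177]).
Proof. exact: (gen c59_1 c59_2 c59_3). Qed.

Definition bb60 : seq (seq nat) := [::
[:: 0; 99; 159; 456];
[:: 19; 80; 154; 456];
[:: 38; 173; 309; 456];
[:: 76; 268; 332; 456];
[:: 152; 289; 447; 456];
[:: 171; 346; 433; 456];
[:: 190; 267; 347; 456];
[:: 266; 381; 440; 456];
[:: 0; 66; 144; 459];
[:: 19; 104; 166; 459];
[:: 38; 185; 339; 459];
[:: 76; 280; 329; 459];
[:: 152; 313; 450; 459];
[:: 171; 370; 409; 459];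
[:: 190; 273; 377; 459];
[:: 266; 387; 401; 459];
[:: 0; 105; 141; 462];
[:: 19; 86; 157; 462];
[:: 38; 176; 288; 462];
[:: 76; 271; 317; 462];
[:: 152; 295; 405; 462];
[:: 171; 352; 427; 462];
[:: 190; 240; 383; 462];
[:: 266; 354; 416; 462];
[:: 0; 72; 126; 465];
[:: 19; 110; 169; 465];
[:: 38; 188; 318; 465];
[:: 76; 283; 314; 465];
[:: 152; 319; 408; 465];
[:: 171; 376; 403; 465];
[:: 190; 246; 356; 465];
[:: 266; 360; 434; 465];
[:: 0; 108; 132; 468];
[:: 19; 89; 130; 468];
[:: 38; 206; 306; 468];
[:: 76; 244; 338; 468];
[:: 152; 298; 441; 468];
[:: 171; 355; 424; 468];
[:: 190; 255; 344; 468];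
[:: 266; 369; 404; 468];
[:: 0; 63; 153; 471];
[:: 19; 101; 136; 471];
[:: 38; 212; 321; 471];
[:: 76; 250; 308; 471];
[:: 152; 310; 414; 471];
[:: 171; 367; 412; 471];
[:: 190; 258; 359; 471];
[:: 266; 372; 413; 471];
[:: 57; 153; 216; 474];
[:: 76; 116; 199; 474];
[:: 95; 248; 366; 474];
[:: 133; 289; 368; 474];
[:: 209; 346; 429; 474];
[:: 19; 270; 439; 474];
[:: 38; 229; 333; 474];
[:: 0; 287; 419; 474];
[:: 57; 159; 201; 477];
[:: 76; 128; 196; 477];
[:: 95; 254; 396; 477];
[:: 133; 313; 353; 477];
[:: 209; 370; 438; 477];
[:: 19; 237; 451; 477];
[:: 38; 235; 336; 477];
[:: 0; 299; 425; 477];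
[:: 57; 126; 198; 480];
[:: 76; 119; 184; 480];
[:: 95; 278; 345; 480];
[:: 133; 295; 350; 480];
[:: 209; 352; 417; 480];
[:: 19; 276; 442; 480];
[:: 38; 259; 291; 480];
[:: 0; 290; 449; 480];
[:: 57; 132; 183; 483];
[:: 76; 131; 181; 483];
[:: 95; 284; 375; 483];
[:: 133; 319; 392; 483];
[:: 209; 376; 426; 483];
[:: 19; 243; 454; 483];
[:: 38; 265; 294; 483];
[:: 0; 302; 455; 483];
[:: 57; 141; 189; 486];
[:: 76; 149; 205; 486];
[:: 95; 236; 363; 486];
[:: 133; 298; 398; 486];
[:: 209; 355; 411; 486];
[:: 19; 279; 415; 486];
[:: 38; 274; 327; 486];
[:: 0; 320; 407; 486];
[:: 57; 144; 210; 489];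
[:: 76; 155; 175; 489];
[:: 95; 239; 378; 489];
[:: 133; 310; 362; 489];
[:: 209; 367; 444; 489];
[:: 19; 234; 421; 489];
[:: 38; 277; 300; 489];
[:: 0; 326; 410; 489];
[:: 114; 210; 231; 492];
[:: 133; 194; 253; 492];
[:: 0; 137; 311; 492];
[:: 38; 172; 349; 492];
[:: 19; 248; 408; 492];
[:: 76; 327; 448; 492];
[:: 95; 325; 384; 492];
[:: 57; 362; 455; 492];
[:: 114; 216; 249; 495];
[:: 133; 218; 232; 495];
[:: 0; 161; 296; 495];
[:: 38; 178; 391; 495];
[:: 19; 254; 405; 495];
[:: 76; 294; 400; 495];
[:: 95; 337; 351; 495];
[:: 57; 368; 449; 495];
[:: 114; 183; 264; 498];
[:: 133; 200; 262; 498];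
[:: 0; 143; 293; 498];
[:: 38; 202; 388; 498];
[:: 19; 278; 450; 498];
[:: 76; 333; 436; 498];
[:: 95; 328; 390; 498];
[:: 57; 392; 425; 498];
[:: 114; 189; 282; 501];
[:: 133; 224; 241; 501];
[:: 0; 167; 335; 501];
[:: 38; 208; 373; 501];
[:: 19; 284; 447; 501];
[:: 76; 300; 445; 501];
[:: 95; 340; 357; 501];
[:: 57; 398; 419; 501];
[:: 114; 198; 252; 504];
[:: 133; 203; 238; 504];
[:: 0; 146; 341; 504];
[:: 38; 217; 379; 504];
[:: 19; 236; 414; 504];
[:: 76; 336; 430; 504];
[:: 95; 301; 393; 504];
[:: 57; 350; 410; 504];
[:: 114; 201; 261; 507];
[:: 133; 215; 256; 507];
[:: 0; 158; 305; 507];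
[:: 38; 220; 343; 507];
[:: 19; 239; 441; 507];
[:: 76; 291; 406; 507];
[:: 95; 307; 348; 507];
[:: 57; 353; 407; 507];
[:: 171; 267; 312; 510];
[:: 190; 251; 310; 510];
[:: 57; 191; 365; 510];
[:: 19; 59; 232; 510];
[:: 76; 287; 435; 510];
[:: 133; 381; 403; 510];
[:: 0; 116; 397; 510];
[:: 38; 135; 443; 510];
[:: 171; 273; 303; 513];
[:: 190; 275; 289; 513];
[:: 57; 197; 389; 513];
[:: 19; 71; 256; 513];
[:: 76; 299; 423; 513];
[:: 133; 387; 427; 513];
[:: 0; 128; 385; 513];
[:: 38; 147; 422; 513];
[:: 171; 240; 324; 516];
[:: 190; 257; 319; 516];
[:: 57; 221; 371; 516];
[:: 19; 62; 238; 516];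
[:: 76; 290; 432; 516];
[:: 133; 354; 409; 516];
[:: 0; 119; 394; 516];
[:: 38; 138; 452; 516];
[:: 171; 246; 315; 519];
[:: 190; 281; 298; 519];
[:: 57; 227; 395; 519];
[:: 19; 74; 262; 519];
[:: 76; 302; 420; 519];
[:: 133; 360; 433; 519];
[:: 0; 131; 382; 519];
[:: 38; 150; 431; 519];
[:: 171; 255; 330; 522];
[:: 190; 260; 295; 522];
[:: 57; 179; 374; 522];
[:: 19; 92; 241; 522];
[:: 76; 320; 402; 522];
[:: 133; 369; 412; 522];
[:: 0; 149; 364; 522];
[:: 38; 168; 428; 522];
[:: 171; 258; 297; 525];
[:: 190; 272; 313; 525];
[:: 57; 182; 386; 525];
[:: 19; 98; 253; 525];
[:: 76; 326; 453; 525];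
[:: 133; 372; 424; 525];
[:: 0; 155; 358; 525];
[:: 38; 117; 446; 525];
[:: 228; 327; 348; 528];
[:: 247; 308; 391; 528];
[:: 38; 156; 233; 528];
[:: 76; 134; 322; 528];
[:: 133; 344; 402; 528];
[:: 0; 172; 442; 528];
[:: 19; 99; 185; 528];
[:: 95; 213; 452; 528];
[:: 228; 294; 384; 531];
[:: 247; 332; 343; 531];
[:: 38; 123; 263; 531];
[:: 76; 140; 316; 531];
[:: 133; 356; 420; 531];
[:: 0; 178; 415; 531];
[:: 19; 66; 212; 531];
[:: 95; 180; 428; 531];
[:: 228; 333; 357; 534];
[:: 247; 314; 379; 534];
[:: 38; 162; 269; 534];
[:: 76; 164; 292; 534];
[:: 133; 347; 435; 534];
[:: 0; 202; 421; 534];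
[:: 19; 105; 206; 534];
[:: 95; 219; 446; 534];
[:: 228; 300; 393; 537];
[:: 247; 338; 388; 537];
[:: 38; 129; 242; 537];
[:: 76; 170; 286; 537];
[:: 133; 359; 453; 537];
[:: 0; 208; 451; 537];
[:: 19; 72; 176; 537];
[:: 95; 186; 422; 537];
[:: 228; 336; 390; 540];
[:: 247; 317; 373; 540];
[:: 38; 165; 230; 540];
[:: 76; 122; 334; 540];
[:: 133; 377; 423; 540];
[:: 0; 217; 439; 540];
[:: 19; 108; 188; 540];
[:: 95; 222; 443; 540];
[:: 228; 291; 351; 543];
[:: 247; 329; 349; 543];
[:: 38; 120; 245; 543];
[:: 76; 125; 331; 543];
[:: 133; 383; 432; 543];
[:: 0; 220; 454; 543];
[:: 19; 63; 173; 543];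
[:: 95; 177; 431; 543];
[:: 0; 306; 345; 546];
[:: 19; 289; 395; 546];
[:: 95; 210; 314; 546];
[:: 133; 191; 388; 546];
[:: 38; 175; 426; 546];
[:: 57; 232; 409; 546];
[:: 76; 156; 230; 546];
[:: 152; 249; 425; 546];
[:: 0; 318; 363; 549];
[:: 19; 313; 371; 549];
[:: 95; 216; 317; 549];
[:: 133; 197; 379; 549];
[:: 38; 199; 417; 549];
[:: 57; 256; 412; 549];
[:: 76; 123; 242; 549];
[:: 152; 261; 410; 549];
[:: 0; 309; 378; 552];
[:: 19; 295; 389; 552];
[:: 95; 183; 329; 552];
[:: 133; 221; 343; 552];
[:: 38; 181; 438; 552];
[:: 57; 238; 424; 552];
[:: 76; 162; 233; 552];
[:: 152; 252; 407; 552];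
[:: 0; 321; 396; 555];
[:: 19; 319; 365; 555];
[:: 95; 189; 332; 555];
[:: 133; 227; 391; 555];
[:: 38; 205; 429; 555];
[:: 57; 262; 427; 555];
[:: 76; 129; 245; 555];
[:: 152; 264; 449; 555];
[:: 0; 339; 366; 558];
[:: 19; 298; 386; 558];
[:: 95; 198; 308; 558];
[:: 133; 179; 349; 558];
[:: 38; 184; 444; 558];
[:: 57; 241; 403; 558];
[:: 76; 165; 263; 558];
[:: 152; 282; 455; 558];
[:: 0; 288; 375; 561];
[:: 19; 310; 374; 561];
[:: 95; 201; 338; 561];
[:: 133; 182; 373; 561];
[:: 38; 196; 411; 561];
[:: 57; 253; 433; 561];
[:: 76; 120; 269; 561];
[:: 152; 231; 419; 561];
[:: 0; 96; 387; 564];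
[:: 38; 97; 364; 564];
[:: 152; 270; 395; 564];
[:: 19; 172; 269; 564];
[:: 95; 232; 423; 564];
[:: 114; 286; 442; 564];
[:: 133; 213; 329; 564];
[:: 209; 327; 401; 564];
[:: 0; 102; 372; 567];
[:: 38; 109; 382; 567];
[:: 152; 237; 371; 567];
[:: 19; 178; 230; 567];
[:: 95; 256; 453; 567];
[:: 114; 292; 415; 567];
[:: 133; 180; 308; 567];
[:: 209; 294; 413; 567];
[:: 0; 69; 369; 570];
[:: 38; 100; 397; 570];
[:: 152; 276; 389; 570];
[:: 19; 202; 245; 570];
[:: 95; 238; 402; 570];
[:: 114; 316; 421; 570];
[:: 133; 219; 338; 570];
[:: 209; 333; 404; 570];
[:: 0; 75; 354; 573];
[:: 38; 112; 358; 573];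
[:: 152; 243; 365; 573];
[:: 19; 208; 263; 573];
[:: 95; 262; 432; 573];
[:: 114; 322; 451; 573];
[:: 133; 186; 317; 573];
[:: 209; 300; 416; 573];
[:: 0; 84; 360; 576];
[:: 38; 73; 385; 576];
[:: 152; 279; 386; 576];
[:: 19; 217; 233; 576];
[:: 95; 241; 420; 576];
[:: 114; 331; 439; 576];
[:: 133; 222; 314; 576];
[:: 209; 336; 434; 576];
[:: 0; 87; 381; 579];
[:: 38; 79; 394; 579];
[:: 152; 234; 374; 579];
[:: 19; 220; 242; 579];
[:: 95; 253; 435; 579];
[:: 114; 334; 454; 579];
[:: 133; 177; 332; 579];
[:: 209; 291; 440; 579];
[:: 114; 251; 363; 582];
[:: 133; 173; 274; 582];
[:: 57; 134; 331; 582];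
[:: 0; 324; 401; 582];
[:: 38; 211; 441; 582];
[:: 76; 192; 364; 582];
[:: 19; 362; 406; 582];
[:: 95; 267; 287; 582];
[:: 114; 275; 375; 585];
[:: 133; 185; 265; 585];
[:: 57; 140; 322; 585];
[:: 0; 330; 413; 585];
[:: 38; 223; 408; 585];
[:: 76; 204; 382; 585];
[:: 19; 368; 448; 585];
[:: 95; 273; 299; 585];
[:: 114; 257; 366; 588];
[:: 133; 176; 229; 588];
[:: 57; 164; 286; 588];
[:: 0; 297; 404; 588];
[:: 38; 214; 447; 588];
[:: 76; 195; 397; 588];
[:: 19; 392; 445; 588];
[:: 95; 240; 290; 588];
[:: 114; 281; 378; 591];
[:: 133; 188; 277; 591];
[:: 57; 170; 334; 591];
[:: 0; 303; 416; 591];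
[:: 38; 226; 414; 591];
[:: 76; 207; 358; 591];
[:: 19; 398; 430; 591];
[:: 95; 246; 302; 591];
[:: 114; 260; 396; 594];
[:: 133; 206; 235; 594];
[:: 57; 122; 292; 594];
[:: 0; 312; 434; 594];
[:: 38; 187; 450; 594];
[:: 76; 225; 385; 594];
[:: 19; 350; 436; 594];
[:: 95; 255; 320; 594];
[:: 114; 272; 345; 597];
[:: 133; 212; 259; 597];
[:: 57; 125; 316; 597];
[:: 0; 315; 440; 597];
[:: 38; 193; 405; 597];
[:: 76; 174; 394; 597];
[:: 19; 353; 400; 597];
[:: 95; 258; 326; 597];
[:: 0; 134; 390; 600];
[:: 133; 248; 442; 600];
[:: 114; 173; 419; 600];
[:: 57; 344; 435; 600];
[:: 38; 58; 237; 600];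
[:: 190; 324; 349; 600];
[:: 19; 229; 341; 600];
[:: 95; 192; 286; 600];
[:: 0; 140; 393; 603];
[:: 133; 254; 415; 603];
[:: 114; 185; 425; 603];
[:: 57; 356; 423; 603];
[:: 38; 64; 234; 603];
[:: 190; 330; 391; 603];
[:: 19; 235; 335; 603];
[:: 95; 204; 292; 603];
[:: 0; 164; 348; 606];
[:: 133; 278; 421; 606];
[:: 114; 176; 449; 606];
[:: 57; 347; 432; 606];
[:: 38; 88; 279; 606];
[:: 190; 297; 388; 606];
[:: 19; 259; 311; 606];
[:: 95; 195; 316; 606];
[:: 0; 170; 351; 609];
[:: 133; 284; 451; 609];
[:: 114; 188; 455; 609];
[:: 57; 359; 420; 609];
[:: 38; 94; 276; 609];
[:: 190; 303; 373; 609];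
[:: 19; 265; 305; 609];
[:: 95; 207; 322; 609];
[:: 0; 122; 384; 612];
[:: 133; 236; 439; 612];
[:: 114; 206; 407; 612];
[:: 57; 377; 402; 612];
[:: 38; 103; 243; 612];
[:: 190; 312; 379; 612];
[:: 19; 274; 296; 612];
[:: 95; 225; 331; 612];
[:: 0; 125; 357; 615];
[:: 133; 239; 454; 615];
[:: 114; 212; 410; 615];
[:: 57; 383; 453; 615];
[:: 38; 106; 270; 615];
[:: 190; 315; 343; 615];
[:: 19; 277; 293; 615];
[:: 95; 174; 334; 615];
[:: 0; 115; 308; 618];
[:: 114; 324; 347; 618];
[:: 76; 137; 414; 618];
[:: 190; 325; 404; 618];
[:: 209; 251; 382; 618];
[:: 57; 270; 445; 618];
[:: 19; 77; 351; 618];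
[:: 38; 213; 271; 618];
[:: 0; 121; 332; 621];
[:: 114; 330; 377; 621];
[:: 76; 161; 447; 621];
[:: 190; 337; 434; 621];
[:: 209; 275; 394; 621];
[:: 57; 237; 436; 621];
[:: 19; 83; 348; 621];
[:: 38; 180; 244; 621];
[:: 0; 145; 314; 624];
[:: 114; 297; 383; 624];
[:: 76; 143; 408; 624];
[:: 190; 328; 440; 624];
[:: 209; 257; 385; 624];
[:: 57; 276; 400; 624];
[:: 19; 107; 393; 624];
[:: 38; 219; 250; 624];
[:: 0; 151; 338; 627];
[:: 114; 303; 356; 627];
[:: 76; 167; 441; 627];
[:: 190; 340; 413; 627];
[:: 209; 281; 397; 627];
[:: 57; 243; 448; 627];
[:: 19; 113; 390; 627];
[:: 38; 186; 280; 627];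
[:: 0; 160; 317; 630];
[:: 114; 312; 344; 630];
[:: 76; 146; 405; 630];
[:: 190; 301; 401; 630];
[:: 209; 260; 358; 630];
[:: 57; 279; 406; 630];
[:: 19; 65; 357; 630];
[:: 38; 222; 268; 630];
[:: 0; 163; 329; 633];
[:: 114; 315; 359; 633];
[:: 76; 158; 450; 633];
[:: 190; 307; 416; 633];
[:: 209; 272; 364; 633];
[:: 57; 234; 430; 633];
[:: 19; 68; 384; 633];
[:: 38; 177; 283; 633];
[:: 0; 78; 120; 213];
[:: 0; 90; 156; 180];
[:: 0; 81; 129; 219];
[:: 0; 93; 165; 186];
[:: 0; 111; 162; 222];
[:: 0; 60; 123; 177];
[:: 228; 306; 378; 444];
[:: 228; 318; 366; 429];
[:: 228; 309; 375; 426];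
[:: 228; 321; 363; 411];
[:: 228; 339; 345; 417];
[:: 228; 288; 396; 438];
[:: 57; 133; 209; 380];
[:: 0; 209; 361; 418];
[:: 0; 190; 266; 380];
[:: 57; 171; 266; 418];
[:: 0; 114; 171; 304];
[:: 57; 190; 247; 285];
[:: 114; 209; 323; 437];
[:: 0; 76; 133; 247];
[:: 0; 152; 228; 399];
[:: 228; 285; 380; 418];
[:: 114; 266; 285; 342];
[:: 0; 95; 285; 437];
[:: 0; 57; 323; 342];
[:: 57; 152; 361; 437]].

Lemma c60_1 : chk1 60 bb60. Proof. by vm_compute. Qed.
Lemma c60_2 : chk2 60 bb60. Proof. by vm_compute. Qed.
Lemma c60_3 : chk3 60. Proof. by vm_compute. Qed.
Lemma ex180 : exists (V : finType) (G B : {set {set V}}), is_4GDD G B /\ has_type G (nseq 8 57 ++ [:: 180]).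
Proof. exact: (gen c60_1 c60_2 c60_3). Qed.

Definition bb61 : seq (seq nat) := [::
[:: 0; 99; 159; 456];
[:: 19; 80; 154; 456];
[:: 38; 173; 309; 456];
[:: 76; 268; 332; 456];
[:: 152; 289; 447; 456];
[:: 171; 346; 433; 456];
[:: 190; 267; 347; 456];
[:: 266; 381; 440; 456];
[:: 0; 66; 144; 459];
[:: 19; 104; 166; 459];
[:: 38; 185; 339; 459];
[:: 76; 280; 329; 459];
[:: 152; 313; 450; 459];
[:: 171; 370; 409; 459];
[:: 190; 273; 377; 459];
[:: 266; 387; 401; 459];
[:: 0; 105; 141; 462];
[:: 19; 86; 157; 462];
[:: 38; 176; 288; 462];
[:: 76; 271; 317; 462];
[:: 152; 295; 405; 462];
[:: 171; 352; 427; 462];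
[:: 190; 240; 383; 462];
[:: 266; 354; 416; 462];
[:: 0; 72; 126; 465];
[:: 19; 110; 169; 465];
[:: 38; 188; 318; 465];
[:: 76; 283; 314; 465];
[:: 152; 319; 408; 465];
[:: 171; 376; 403; 465];
[:: 190; 246; 356; 465];
[:: 266; 360; 434; 465];
[:: 0; 108; 132; 468];
[:: 19; 89; 130; 468];
[:: 38; 206; 306; 468];
[:: 76; 244; 338; 468];
[:: 152; 298; 441; 468];
[:: 171; 355; 424; 468];
[:: 190; 255; 344; 468];
[:: 266; 369; 404; 468];
[:: 0; 63; 153; 471];
[:: 19; 101; 136; 471];
[:: 38; 212; 321; 471];
[:: 76; 250; 308; 471];
[:: 152; 310; 414; 471];
[:: 171; 367; 412; 471];
[:: 190; 258; 359; 471];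
[:: 266; 372; 413; 471];
[:: 57; 153; 216; 474];
[:: 76; 116; 199; 474];
[:: 95; 248; 366; 474];
[:: 133; 289; 368; 474];
[:: 209; 346; 429; 474];
[:: 19; 270; 439; 474];
[:: 38; 229; 333; 474];
[:: 0; 287; 419; 474];
[:: 57; 159; 201; 477];
[:: 76; 128; 196; 477];
[:: 95; 254; 396; 477];
[:: 133; 313; 353; 477];
[:: 209; 370; 438; 477];
[:: 19; 237; 451; 477];
[:: 38; 235; 336; 477];
[:: 0; 299; 425; 477];
[:: 57; 126; 198; 480];
[:: 76; 119; 184; 480];
[:: 95; 278; 345; 480];
[:: 133; 295; 350; 480];
[:: 209; 352; 417; 480];
[:: 19; 276; 442; 480];
[:: 38; 259; 291; 480];
[:: 0; 290; 449; 480];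
[:: 57; 132; 183; 483];
[:: 76; 131; 181; 483];
[:: 95; 284; 375; 483];
[:: 133; 319; 392; 483];
[:: 209; 376; 426; 483];
[:: 19; 243; 454; 483];
[:: 38; 265; 294; 483];
[:: 0; 302; 455; 483];
[:: 57; 141; 189; 486];
[:: 76; 149; 205; 486];
[:: 95; 236; 363; 486];
[:: 133; 298; 398; 486];
[:: 209; 355; 411; 486];
[:: 19; 279; 415; 486];
[:: 38; 274; 327; 486];
[:: 0; 320; 407; 486];
[:: 57; 144; 210; 489];
[:: 76; 155; 175; 489];
[:: 95; 239; 378; 489];
[:: 133; 310; 362; 489];
[:: 209; 367; 444; 489];
[:: 19; 234; 421; 489];
[:: 38; 277; 300; 489];
[:: 0; 326; 410; 489];
[:: 114; 210; 231; 492];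
[:: 133; 194; 253; 492];
[:: 0; 137; 311; 492];
[:: 38; 172; 349; 492];
[:: 19; 248; 408; 492];
[:: 76; 327; 448; 492];
[:: 95; 325; 384; 492];
[:: 57; 362; 455; 492];
[:: 114; 216; 249; 495];
[:: 133; 218; 232; 495];
[:: 0; 161; 296; 495];
[:: 38; 178; 391; 495];
[:: 19; 254; 405; 495];
[:: 76; 294; 400; 495];
[:: 95; 337; 351; 495];
[:: 57; 368; 449; 495];
[:: 114; 183; 264; 498];
[:: 133; 200; 262; 498];
[:: 0; 143; 293; 498];
[:: 38; 202; 388; 498];
[:: 19; 278; 450; 498];
[:: 76; 333; 436; 498];
[:: 95; 328; 390; 498];
[:: 57; 392; 425; 498];
[:: 114; 189; 282; 501];
[:: 133; 224; 241; 501];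
[:: 0; 167; 335; 501];
[:: 38; 208; 373; 501];
[:: 19; 284; 447; 501];
[:: 76; 300; 445; 501];
[:: 95; 340; 357; 501];
[:: 57; 398; 419; 501];
[:: 114; 198; 252; 504];
[:: 133; 203; 238; 504];
[:: 0; 146; 341; 504];
[:: 38; 217; 379; 504];
[:: 19; 236; 414; 504];
[:: 76; 336; 430; 504];
[:: 95; 301; 393; 504];
[:: 57; 350; 410; 504];
[:: 114; 201; 261; 507];
[:: 133; 215; 256; 507];
[:: 0; 158; 305; 507];
[:: 38; 220; 343; 507];
[:: 19; 239; 441; 507];
[:: 76; 291; 406; 507];
[:: 95; 307; 348; 507];
[:: 57; 353; 407; 507];
[:: 171; 267; 312; 510];
[:: 190; 251; 310; 510];
[:: 57; 191; 365; 510];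
[:: 19; 59; 232; 510];
[:: 76; 287; 435; 510];
[:: 133; 381; 403; 510];
[:: 0; 116; 397; 510];
[:: 38; 135; 443; 510];
[:: 171; 273; 303; 513];
[:: 190; 275; 289; 513];
[:: 57; 197; 389; 513];
[:: 19; 71; 256; 513];
[:: 76; 299; 423; 513];
[:: 133; 387; 427; 513];
[:: 0; 128; 385; 513];
[:: 38; 147; 422; 513];
[:: 171; 240; 324; 516];
[:: 190; 257; 319; 516];
[:: 57; 221; 371; 516];
[:: 19; 62; 238; 516];
[:: 76; 290; 432; 516];
[:: 133; 354; 409; 516];
[:: 0; 119; 394; 516];
[:: 38; 138; 452; 516];
[:: 171; 246; 315; 519];
[:: 190; 281; 298; 519];
[:: 57; 227; 395; 519];
[:: 19; 74; 262; 519];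
[:: 76; 302; 420; 519];
[:: 133; 360; 433; 519];
[:: 0; 131; 382; 519];
[:: 38; 150; 431; 519];
[:: 171; 255; 330; 522];
[:: 190; 260; 295; 522];
[:: 57; 179; 374; 522];
[:: 19; 92; 241; 522];
[:: 76; 320; 402; 522];
[:: 133; 369; 412; 522];
[:: 0; 149; 364; 522];
[:: 38; 168; 428; 522];
[:: 171; 258; 297; 525];
[:: 190; 272; 313; 525];
[:: 57; 182; 386; 525];
[:: 19; 98; 253; 525];
[:: 76; 326; 453; 525];
[:: 133; 372; 424; 525];
[:: 0; 155; 358; 525];
[:: 38; 117; 446; 525];
[:: 228; 327; 348; 528];
[:: 247; 308; 391; 528];
[:: 38; 156; 233; 528];
[:: 76; 134; 322; 528];
[:: 133; 344; 402; 528];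
[:: 0; 172; 442; 528];
[:: 19; 99; 185; 528];
[:: 95; 213; 452; 528];
[:: 228; 294; 384; 531];
[:: 247; 332; 343; 531];
[:: 38; 123; 263; 531];
[:: 76; 140; 316; 531];
[:: 133; 356; 420; 531];
[:: 0; 178; 415; 531];
[:: 19; 66; 212; 531];
[:: 95; 180; 428; 531];
[:: 228; 333; 357; 534];
[:: 247; 314; 379; 534];
[:: 38; 162; 269; 534];
[:: 76; 164; 292; 534];
[:: 133; 347; 435; 534];
[:: 0; 202; 421; 534];
[:: 19; 105; 206; 534];
[:: 95; 219; 446; 534];
[:: 228; 300; 393; 537];
[:: 247; 338; 388; 537];
[:: 38; 129; 242; 537];
[:: 76; 170; 286; 537];
[:: 133; 359; 453; 537];
[:: 0; 208; 451; 537];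
[:: 19; 72; 176; 537];
[:: 95; 186; 422; 537];
[:: 228; 336; 390; 540];
[:: 247; 317; 373; 540];
[:: 38; 165; 230; 540];
[:: 76; 122; 334; 540];
[:: 133; 377; 423; 540];
[:: 0; 217; 439; 540];
[:: 19; 108; 188; 540];
[:: 95; 222; 443; 540];
[:: 228; 291; 351; 543];
[:: 247; 329; 349; 543];
[:: 38; 120; 245; 543];
[:: 76; 125; 331; 543];
[:: 133; 383; 432; 543];
[:: 0; 220; 454; 543];
[:: 19; 63; 173; 543];
[:: 95; 177; 431; 543];
[:: 0; 306; 345; 546];
[:: 19; 289; 395; 546];
[:: 95; 210; 314; 546];
[:: 133; 191; 388; 546];
[:: 38; 175; 426; 546];
[:: 57; 232; 409; 546];
[:: 76; 156; 230; 546];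
[:: 152; 249; 425; 546];
[:: 0; 318; 363; 549];
[:: 19; 313; 371; 549];
[:: 95; 216; 317; 549];
[:: 133; 197; 379; 549];
[:: 38; 199; 417; 549];
[:: 57; 256; 412; 549];
[:: 76; 123; 242; 549];
[:: 152; 261; 410; 549];
[:: 0; 309; 378; 552];
[:: 19; 295; 389; 552];
[:: 95; 183; 329; 552];
[:: 133; 221; 343; 552];
[:: 38; 181; 438; 552];
[:: 57; 238; 424; 552];
[:: 76; 162; 233; 552];
[:: 152; 252; 407; 552];
[:: 0; 321; 396; 555];
[:: 19; 319; 365; 555];
[:: 95; 189; 332; 555];
[:: 133; 227; 391; 555];
[:: 38; 205; 429; 555];
[:: 57; 262; 427; 555];
[:: 76; 129; 245; 555];
[:: 152; 264; 449; 555];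
[:: 0; 339; 366; 558];
[:: 19; 298; 386; 558];
[:: 95; 198; 308; 558];
[:: 133; 179; 349; 558];
[:: 38; 184; 444; 558];
[:: 57; 241; 403; 558];
[:: 76; 165; 263; 558];
[:: 152; 282; 455; 558];
[:: 0; 288; 375; 561];
[:: 19; 310; 374; 561];
[:: 95; 201; 338; 561];
[:: 133; 182; 373; 561];
[:: 38; 196; 411; 561];
[:: 57; 253; 433; 561];
[:: 76; 120; 269; 561];
[:: 152; 231; 419; 561];
[:: 0; 96; 387; 564];
[:: 38; 97; 364; 564];
[:: 152; 270; 395; 564];
[:: 19; 172; 269; 564];
[:: 95; 232; 423; 564];
[:: 114; 286; 442; 564];
[:: 133; 213; 329; 564];
[:: 209; 327; 401; 564];
[:: 0; 102; 372; 567];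
[:: 38; 109; 382; 567];
[:: 152; 237; 371; 567];
[:: 19; 178; 230; 567];
[:: 95; 256; 453; 567];
[:: 114; 292; 415; 567];
[:: 133; 180; 308; 567];
[:: 209; 294; 413; 567];
[:: 0; 69; 369; 570];
[:: 38; 100; 397; 570];
[:: 152; 276; 389; 570];
[:: 19; 202; 245; 570];
[:: 95; 238; 402; 570];
[:: 114; 316; 421; 570];
[:: 133; 219; 338; 570];
[:: 209; 333; 404; 570];
[:: 0; 75; 354; 573];
[:: 38; 112; 358; 573];
[:: 152; 243; 365; 573];
[:: 19; 208; 263; 573];
[:: 95; 262; 432; 573];
[:: 114; 322; 451; 573];
[:: 133; 186; 317; 573];
[:: 209; 300; 416; 573];
[:: 0; 84; 360; 576];
[:: 38; 73; 385; 576];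
[:: 152; 279; 386; 576];
[:: 19; 217; 233; 576];
[:: 95; 241; 420; 576];
[:: 114; 331; 439; 576];
[:: 133; 222; 314; 576];
[:: 209; 336; 434; 576];
[:: 0; 87; 381; 579];
[:: 38; 79; 394; 579];
[:: 152; 234; 374; 579];
[:: 19; 220; 242; 579];
[:: 95; 253; 435; 579];
[:: 114; 334; 454; 579];
[:: 133; 177; 332; 579];
[:: 209; 291; 440; 579];
[:: 114; 251; 363; 582];
[:: 133; 173; 274; 582];
[:: 57; 134; 331; 582];
[:: 0; 324; 401; 582];
[:: 38; 211; 441; 582];
[:: 76; 192; 364; 582];
[:: 19; 362; 406; 582];
[:: 95; 267; 287; 582];
[:: 114; 275; 375; 585];
[:: 133; 185; 265; 585];
[:: 57; 140; 322; 585];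
[:: 0; 330; 413; 585];
[:: 38; 223; 408; 585];
[:: 76; 204; 382; 585];
[:: 19; 368; 448; 585];
[:: 95; 273; 299; 585];
[:: 114; 257; 366; 588];
[:: 133; 176; 229; 588];
[:: 57; 164; 286; 588];
[:: 0; 297; 404; 588];
[:: 38; 214; 447; 588];
[:: 76; 195; 397; 588];
[:: 19; 392; 445; 588];
[:: 95; 240; 290; 588];
[:: 114; 281; 378; 591];
[:: 133; 188; 277; 591];
[:: 57; 170; 334; 591];
[:: 0; 303; 416; 591];
[:: 38; 226; 414; 591];
[:: 76; 207; 358; 591];
[:: 19; 398; 430; 591];
[:: 95; 246; 302; 591];
[:: 114; 260; 396; 594];
[:: 133; 206; 235; 594];
[:: 57; 122; 292; 594];
[:: 0; 312; 434; 594];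
[:: 38; 187; 450; 594];
[:: 76; 225; 385; 594];
[:: 19; 350; 436; 594];
[:: 95; 255; 320; 594];
[:: 114; 272; 345; 597];
[:: 133; 212; 259; 597];
[:: 57; 125; 316; 597];
[:: 0; 315; 440; 597];
[:: 38; 193; 405; 597];
[:: 76; 174; 394; 597];
[:: 19; 353; 400; 597];
[:: 95; 258; 326; 597];
[:: 0; 134; 390; 600];
[:: 133; 248; 442; 600];
[:: 114; 173; 419; 600];
[:: 57; 344; 435; 600];
[:: 38; 58; 237; 600];
[:: 190; 324; 349; 600];
[:: 19; 229; 341; 600];
[:: 95; 192; 286; 600];
[:: 0; 140; 393; 603];
[:: 133; 254; 415; 603];
[:: 114; 185; 425; 603];
[:: 57; 356; 423; 603];
[:: 38; 64; 234; 603];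
[:: 190; 330; 391; 603];
[:: 19; 235; 335; 603];
[:: 95; 204; 292; 603];
[:: 0; 164; 348; 606];
[:: 133; 278; 421; 606];
[:: 114; 176; 449; 606];
[:: 57; 347; 432; 606];
[:: 38; 88; 279; 606];
[:: 190; 297; 388; 606];
[:: 19; 259; 311; 606];
[:: 95; 195; 316; 606];
[:: 0; 170; 351; 609];
[:: 133; 284; 451; 609];
[:: 114; 188; 455; 609];
[:: 57; 359; 420; 609];
[:: 38; 94; 276; 609];
[:: 190; 303; 373; 609];
[:: 19; 265; 305; 609];
[:: 95; 207; 322; 609];
[:: 0; 122; 384; 612];
[:: 133; 236; 439; 612];
[:: 114; 206; 407; 612];
[:: 57; 377; 402; 612];
[:: 38; 103; 243; 612];
[:: 190; 312; 379; 612];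
[:: 19; 274; 296; 612];
[:: 95; 225; 331; 612];
[:: 0; 125; 357; 615];
[:: 133; 239; 454; 615];
[:: 114; 212; 410; 615];
[:: 57; 383; 453; 615];
[:: 38; 106; 270; 615];
[:: 190; 315; 343; 615];
[:: 19; 277; 293; 615];
[:: 95; 174; 334; 615];
[:: 0; 115; 308; 618];
[:: 114; 324; 347; 618];
[:: 76; 137; 414; 618];
[:: 190; 325; 404; 618];
[:: 209; 251; 382; 618];
[:: 57; 270; 445; 618];
[:: 19; 77; 351; 618];
[:: 38; 213; 271; 618];
[:: 0; 121; 332; 621];
[:: 114; 330; 377; 621];
[:: 76; 161; 447; 621];
[:: 190; 337; 434; 621];
[:: 209; 275; 394; 621];
[:: 57; 237; 436; 621];
[:: 19; 83; 348; 621];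
[:: 38; 180; 244; 621];
[:: 0; 145; 314; 624];
[:: 114; 297; 383; 624];
[:: 76; 143; 408; 624];
[:: 190; 328; 440; 624];
[:: 209; 257; 385; 624];
[:: 57; 276; 400; 624];
[:: 19; 107; 393; 624];
[:: 38; 219; 250; 624];
[:: 0; 151; 338; 627];
[:: 114; 303; 356; 627];
[:: 76; 167; 441; 627];
[:: 190; 340; 413; 627];
[:: 209; 281; 397; 627];
[:: 57; 243; 448; 627];
[:: 19; 113; 390; 627];
[:: 38; 186; 280; 627];
[:: 0; 160; 317; 630];
[:: 114; 312; 344; 630];
[:: 76; 146; 405; 630];
[:: 190; 301; 401; 630];
[:: 209; 260; 358; 630];
[:: 57; 279; 406; 630];
[:: 19; 65; 357; 630];
[:: 38; 222; 268; 630];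
[:: 0; 163; 329; 633];
[:: 114; 315; 359; 633];
[:: 76; 158; 450; 633];
[:: 190; 307; 416; 633];
[:: 209; 272; 364; 633];
[:: 57; 234; 430; 633];
[:: 19; 68; 384; 633];
[:: 38; 177; 283; 633];
[:: 95; 152; 304; 636];
[:: 76; 323; 342; 636];
[:: 57; 190; 437; 636];
[:: 247; 285; 399; 636];
[:: 0; 209; 361; 636];
[:: 133; 228; 380; 636];
[:: 38; 171; 266; 636];
[:: 19; 114; 418; 636];
[:: 0; 78; 120; 213];
[:: 0; 90; 156; 180];
[:: 0; 81; 129; 219];
[:: 0; 93; 165; 186];
[:: 0; 111; 162; 222];
[:: 0; 60; 123; 177];
[:: 228; 306; 378; 444];
[:: 228; 318; 366; 429];
[:: 228; 309; 375; 426];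
[:: 228; 321; 363; 411];
[:: 228; 339; 345; 417];
[:: 228; 288; 396; 438];
[:: 0; 76; 266; 437];
[:: 57; 266; 342; 399];
[:: 0; 57; 171; 285];
[:: 57; 152; 209; 228];
[:: 0; 95; 114; 342];
[:: 0; 133; 247; 304];
[:: 171; 228; 304; 342];
[:: 0; 323; 380; 418];
[:: 114; 209; 304; 437];
[:: 114; 190; 380; 399]].

Lemma c61_1 : chk1 61 bb61. Proof. by vm_compute. Qed.
Lemma c61_2 : chk2 61 bb61. Proof. by vm_compute. Qed.
Lemma c61_3 : chk3 61. Proof. by vm_compute. Qed.
Lemma ex183 : exists (V : finType) (G B : {set {set V}}), is_4GDD G B /\ has_type G (nseq 8 57 ++ [:: 183]).
Proof. exact: (gen c61_1 c61_2 c61_3). Qed.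

Definition bb62 : seq (seq nat) := [::
[:: 0; 99; 159; 456];
[:: 19; 80; 154; 456];
[:: 38; 173; 309; 456];
[:: 76; 268; 332; 456];
[:: 152; 289; 447; 456];
[:: 171; 346; 433; 456];
[:: 190; 267; 347; 456];
[:: 266; 381; 440; 456];
[:: 0; 66; 144; 459];
[:: 19; 104; 166; 459];
[:: 38; 185; 339; 459];
[:: 76; 280; 329; 459];
[:: 152; 313; 450; 459];
[:: 171; 370; 409; 459];
[:: 190; 273; 377; 459];
[:: 266; 387; 401; 459];
[:: 0; 105; 141; 462];
[:: 19; 86; 157; 462];
[:: 38; 176; 288; 462];
[:: 76; 271; 317; 462];
[:: 152; 295; 405; 462];
[:: 171; 352; 427; 462];
[:: 190; 240; 383; 462];
[:: 266; 354; 416; 462];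
[:: 0; 72; 126; 465];
[:: 19; 110; 169; 465];
[:: 38; 188; 318; 465];
[:: 76; 283; 314; 465];
[:: 152; 319; 408; 465];
[:: 171; 376; 403; 465];
[:: 190; 246; 356; 465];
[:: 266; 360; 434; 465];
[:: 0; 108; 132; 468];
[:: 19; 89; 130; 468];
[:: 38; 206; 306; 468];
[:: 76; 244; 338; 468];
[:: 152; 298; 441; 468];
[:: 171; 355; 424; 468];
[:: 190; 255; 344; 468];
[:: 266; 369; 404; 468];
[:: 0; 63; 153; 471];
[:: 19; 101; 136; 471];
[:: 38; 212; 321; 471];
[:: 76; 250; 308; 471];
[:: 152; 310; 414; 471];
[:: 171; 367; 412; 471];
[:: 190; 258; 359; 471];
[:: 266; 372; 413; 471];
[:: 57; 153; 216; 474];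
[:: 76; 116; 199; 474];
[:: 95; 248; 366; 474];
[:: 133; 289; 368; 474];
[:: 209; 346; 429; 474];
[:: 19; 270; 439; 474];
[:: 38; 229; 333; 474];
[:: 0; 287; 419; 474];
[:: 57; 159; 201; 477];
[:: 76; 128; 196; 477];
[:: 95; 254; 396; 477];
[:: 133; 313; 353; 477];
[:: 209; 370; 438; 477];
[:: 19; 237; 451; 477];
[:: 38; 235; 336; 477];
[:: 0; 299; 425; 477];
[:: 57; 126; 198; 480];
[:: 76; 119; 184; 480];
[:: 95; 278; 345; 480];
[:: 133; 295; 350; 480];
[:: 209; 352; 417; 480];
[:: 19; 276; 442; 480];
[:: 38; 259; 291; 480];
[:: 0; 290; 449; 480];
[:: 57; 132; 183; 483];
[:: 76; 131; 181; 483];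
[:: 95; 284; 375; 483];
[:: 133; 319; 392; 483];
[:: 209; 376; 426; 483];
[:: 19; 243; 454; 483];
[:: 38; 265; 294; 483];
[:: 0; 302; 455; 483];
[:: 57; 141; 189; 486];
[:: 76; 149; 205; 486];
[:: 95; 236; 363; 486];
[:: 133; 298; 398; 486];
[:: 209; 355; 411; 486];
[:: 19; 279; 415; 486];
[:: 38; 274; 327; 486];
[:: 0; 320; 407; 486];
[:: 57; 144; 210; 489];
[:: 76; 155; 175; 489];
[:: 95; 239; 378; 489];
[:: 133; 310; 362; 489];
[:: 209; 367; 444; 489];
[:: 19; 234; 421; 489];
[:: 38; 277; 300; 489];
[:: 0; 326; 410; 489];
[:: 114; 210; 231; 492];
[:: 133; 194; 253; 492];
[:: 0; 137; 311; 492];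
[:: 38; 172; 349; 492];
[:: 19; 248; 408; 492];
[:: 76; 327; 448; 492];
[:: 95; 325; 384; 492];
[:: 57; 362; 455; 492];
[:: 114; 216; 249; 495];
[:: 133; 218; 232; 495];
[:: 0; 161; 296; 495];
[:: 38; 178; 391; 495];
[:: 19; 254; 405; 495];
[:: 76; 294; 400; 495];
[:: 95; 337; 351; 495];
[:: 57; 368; 449; 495];
[:: 114; 183; 264; 498];
[:: 133; 200; 262; 498];
[:: 0; 143; 293; 498];
[:: 38; 202; 388; 498];
[:: 19; 278; 450; 498];
[:: 76; 333; 436; 498];
[:: 95; 328; 390; 498];
[:: 57; 392; 425; 498];
[:: 114; 189; 282; 501];
[:: 133; 224; 241; 501];
[:: 0; 167; 335; 501];
[:: 38; 208; 373; 501];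
[:: 19; 284; 447; 501];
[:: 76; 300; 445; 501];
[:: 95; 340; 357; 501];
[:: 57; 398; 419; 501];
[:: 114; 198; 252; 504];
[:: 133; 203; 238; 504];
[:: 0; 146; 341; 504];
[:: 38; 217; 379; 504];
[:: 19; 236; 414; 504];
[:: 76; 336; 430; 504];
[:: 95; 301; 393; 504];
[:: 57; 350; 410; 504];
[:: 114; 201; 261; 507];
[:: 133; 215; 256; 507];
[:: 0; 158; 305; 507];
[:: 38; 220; 343; 507];
[:: 19; 239; 441; 507];
[:: 76; 291; 406; 507];
[:: 95; 307; 348; 507];
[:: 57; 353; 407; 507];
[:: 171; 267; 312; 510];
[:: 190; 251; 310; 510];
[:: 57; 191; 365; 510];
[:: 19; 59; 232; 510];
[:: 76; 287; 435; 510];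
[:: 133; 381; 403; 510];
[:: 0; 116; 397; 510];
[:: 38; 135; 443; 510];
[:: 171; 273; 303; 513];
[:: 190; 275; 289; 513];
[:: 57; 197; 389; 513];
[:: 19; 71; 256; 513];
[:: 76; 299; 423; 513];
[:: 133; 387; 427; 513];
[:: 0; 128; 385; 513];
[:: 38; 147; 422; 513];
[:: 171; 240; 324; 516];
[:: 190; 257; 319; 516];
[:: 57; 221; 371; 516];
[:: 19; 62; 238; 516];
[:: 76; 290; 432; 516];
[:: 133; 354; 409; 516];
[:: 0; 119; 394; 516];
[:: 38; 138; 452; 516];
[:: 171; 246; 315; 519];
[:: 190; 281; 298; 519];
[:: 57; 227; 395; 519];
[:: 19; 74; 262; 519];
[:: 76; 302; 420; 519];
[:: 133; 360; 433; 519];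
[:: 0; 131; 382; 519];
[:: 38; 150; 431; 519];
[:: 171; 255; 330; 522];
[:: 190; 260; 295; 522];
[:: 57; 179; 374; 522];
[:: 19; 92; 241; 522];
[:: 76; 320; 402; 522];
[:: 133; 369; 412; 522];
[:: 0; 149; 364; 522];
[:: 38; 168; 428; 522];
[:: 171; 258; 297; 525];
[:: 190; 272; 313; 525];
[:: 57; 182; 386; 525];
[:: 19; 98; 253; 525];
[:: 76; 326; 453; 525];
[:: 133; 372; 424; 525];
[:: 0; 155; 358; 525];
[:: 38; 117; 446; 525];
[:: 228; 327; 348; 528];
[:: 247; 308; 391; 528];
[:: 38; 156; 233; 528];
[:: 76; 134; 322; 528];
[:: 133; 344; 402; 528];
[:: 0; 172; 442; 528];
[:: 19; 99; 185; 528];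
[:: 95; 213; 452; 528];
[:: 228; 294; 384; 531];
[:: 247; 332; 343; 531];
[:: 38; 123; 263; 531];
[:: 76; 140; 316; 531];
[:: 133; 356; 420; 531];
[:: 0; 178; 415; 531];
[:: 19; 66; 212; 531];
[:: 95; 180; 428; 531];
[:: 228; 333; 357; 534];
[:: 247; 314; 379; 534];
[:: 38; 162; 269; 534];
[:: 76; 164; 292; 534];
[:: 133; 347; 435; 534];
[:: 0; 202; 421; 534];
[:: 19; 105; 206; 534];
[:: 95; 219; 446; 534];
[:: 228; 300; 393; 537];
[:: 247; 338; 388; 537];
[:: 38; 129; 242; 537];
[:: 76; 170; 286; 537];
[:: 133; 359; 453; 537];
[:: 0; 208; 451; 537];
[:: 19; 72; 176; 537];
[:: 95; 186; 422; 537];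
[:: 228; 336; 390; 540];
[:: 247; 317; 373; 540];
[:: 38; 165; 230; 540];
[:: 76; 122; 334; 540];
[:: 133; 377; 423; 540];
[:: 0; 217; 439; 540];
[:: 19; 108; 188; 540];
[:: 95; 222; 443; 540];
[:: 228; 291; 351; 543];
[:: 247; 329; 349; 543];
[:: 38; 120; 245; 543];
[:: 76; 125; 331; 543];
[:: 133; 383; 432; 543];
[:: 0; 220; 454; 543];
[:: 19; 63; 173; 543];
[:: 95; 177; 431; 543];
[:: 0; 306; 345; 546];
[:: 19; 289; 395; 546];
[:: 95; 210; 314; 546];
[:: 133; 191; 388; 546];
[:: 38; 175; 426; 546];
[:: 57; 232; 409; 546];
[:: 76; 156; 230; 546];
[:: 152; 249; 425; 546];
[:: 0; 318; 363; 549];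
[:: 19; 313; 371; 549];
[:: 95; 216; 317; 549];
[:: 133; 197; 379; 549];
[:: 38; 199; 417; 549];
[:: 57; 256; 412; 549];
[:: 76; 123; 242; 549];
[:: 152; 261; 410; 549];
[:: 0; 309; 378; 552];
[:: 19; 295; 389; 552];
[:: 95; 183; 329; 552];
[:: 133; 221; 343; 552];
[:: 38; 181; 438; 552];
[:: 57; 238; 424; 552];
[:: 76; 162; 233; 552];
[:: 152; 252; 407; 552];
[:: 0; 321; 396; 555];
[:: 19; 319; 365; 555];
[:: 95; 189; 332; 555];
[:: 133; 227; 391; 555];
[:: 38; 205; 429; 555];
[:: 57; 262; 427; 555];
[:: 76; 129; 245; 555];
[:: 152; 264; 449; 555];
[:: 0; 339; 366; 558];
[:: 19; 298; 386; 558];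
[:: 95; 198; 308; 558];
[:: 133; 179; 349; 558];
[:: 38; 184; 444; 558];
[:: 57; 241; 403; 558];
[:: 76; 165; 263; 558];
[:: 152; 282; 455; 558];
[:: 0; 288; 375; 561];
[:: 19; 310; 374; 561];
[:: 95; 201; 338; 561];
[:: 133; 182; 373; 561];
[:: 38; 196; 411; 561];
[:: 57; 253; 433; 561];
[:: 76; 120; 269; 561];
[:: 152; 231; 419; 561];
[:: 0; 96; 387; 564];
[:: 38; 97; 364; 564];
[:: 152; 270; 395; 564];
[:: 19; 172; 269; 564];
[:: 95; 232; 423; 564];
[:: 114; 286; 442; 564];
[:: 133; 213; 329; 564];
[:: 209; 327; 401; 564];
[:: 0; 102; 372; 567];
[:: 38; 109; 382; 567];
[:: 152; 237; 371; 567];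
[:: 19; 178; 230; 567];
[:: 95; 256; 453; 567];
[:: 114; 292; 415; 567];
[:: 133; 180; 308; 567];
[:: 209; 294; 413; 567];
[:: 0; 69; 369; 570];
[:: 38; 100; 397; 570];
[:: 152; 276; 389; 570];
[:: 19; 202; 245; 570];
[:: 95; 238; 402; 570];
[:: 114; 316; 421; 570];
[:: 133; 219; 338; 570];
[:: 209; 333; 404; 570];
[:: 0; 75; 354; 573];
[:: 38; 112; 358; 573];
[:: 152; 243; 365; 573];
[:: 19; 208; 263; 573];
[:: 95; 262; 432; 573];
[:: 114; 322; 451; 573];
[:: 133; 186; 317; 573];
[:: 209; 300; 416; 573];
[:: 0; 84; 360; 576];
[:: 38; 73; 385; 576];
[:: 152; 279; 386; 576];
[:: 19; 217; 233; 576];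
[:: 95; 241; 420; 576];
[:: 114; 331; 439; 576];
[:: 133; 222; 314; 576];
[:: 209; 336; 434; 576];
[:: 0; 87; 381; 579];
[:: 38; 79; 394; 579];
[:: 152; 234; 374; 579];
[:: 19; 220; 242; 579];
[:: 95; 253; 435; 579];
[:: 114; 334; 454; 579];
[:: 133; 177; 332; 579];
[:: 209; 291; 440; 579];
[:: 114; 251; 363; 582];
[:: 133; 173; 274; 582];
[:: 57; 134; 331; 582];
[:: 0; 324; 401; 582];
[:: 38; 211; 441; 582];
[:: 76; 192; 364; 582];
[:: 19; 362; 406; 582];
[:: 95; 267; 287; 582];
[:: 114; 275; 375; 585];
[:: 133; 185; 265; 585];
[:: 57; 140; 322; 585];
[:: 0; 330; 413; 585];
[:: 38; 223; 408; 585];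
[:: 76; 204; 382; 585];
[:: 19; 368; 448; 585];
[:: 95; 273; 299; 585];
[:: 114; 257; 366; 588];
[:: 133; 176; 229; 588];
[:: 57; 164; 286; 588];
[:: 0; 297; 404; 588];
[:: 38; 214; 447; 588];
[:: 76; 195; 397; 588];
[:: 19; 392; 445; 588];
[:: 95; 240; 290; 588];
[:: 114; 281; 378; 591];
[:: 133; 188; 277; 591];
[:: 57; 170; 334; 591];
[:: 0; 303; 416; 591];
[:: 38; 226; 414; 591];
[:: 76; 207; 358; 591];
[:: 19; 398; 430; 591];
[:: 95; 246; 302; 591];
[:: 114; 260; 396; 594];
[:: 133; 206; 235; 594];
[:: 57; 122; 292; 594];
[:: 0; 312; 434; 594];
[:: 38; 187; 450; 594];
[:: 76; 225; 385; 594];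
[:: 19; 350; 436; 594];
[:: 95; 255; 320; 594];
[:: 114; 272; 345; 597];
[:: 133; 212; 259; 597];
[:: 57; 125; 316; 597];
[:: 0; 315; 440; 597];
[:: 38; 193; 405; 597];
[:: 76; 174; 394; 597];
[:: 19; 353; 400; 597];
[:: 95; 258; 326; 597];
[:: 0; 134; 390; 600];
[:: 133; 248; 442; 600];
[:: 114; 173; 419; 600];
[:: 57; 344; 435; 600];
[:: 38; 58; 237; 600];
[:: 190; 324; 349; 600];
[:: 19; 229; 341; 600];
[:: 95; 192; 286; 600];
[:: 0; 140; 393; 603];
[:: 133; 254; 415; 603];
[:: 114; 185; 425; 603];
[:: 57; 356; 423; 603];
[:: 38; 64; 234; 603];
[:: 190; 330; 391; 603];
[:: 19; 235; 335; 603];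
[:: 95; 204; 292; 603];
[:: 0; 164; 348; 606];
[:: 133; 278; 421; 606];
[:: 114; 176; 449; 606];
[:: 57; 347; 432; 606];
[:: 38; 88; 279; 606];
[:: 190; 297; 388; 606];
[:: 19; 259; 311; 606];
[:: 95; 195; 316; 606];
[:: 0; 170; 351; 609];
[:: 133; 284; 451; 609];
[:: 114; 188; 455; 609];
[:: 57; 359; 420; 609];
[:: 38; 94; 276; 609];
[:: 190; 303; 373; 609];
[:: 19; 265; 305; 609];
[:: 95; 207; 322; 609];
[:: 0; 122; 384; 612];
[:: 133; 236; 439; 612];
[:: 114; 206; 407; 612];
[:: 57; 377; 402; 612];
[:: 38; 103; 243; 612];
[:: 190; 312; 379; 612];
[:: 19; 274; 296; 612];
[:: 95; 225; 331; 612];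
[:: 0; 125; 357; 615];
[:: 133; 239; 454; 615];
[:: 114; 212; 410; 615];
[:: 57; 383; 453; 615];
[:: 38; 106; 270; 615];
[:: 190; 315; 343; 615];
[:: 19; 277; 293; 615];
[:: 95; 174; 334; 615];
[:: 0; 115; 308; 618];
[:: 114; 324; 347; 618];
[:: 76; 137; 414; 618];
[:: 190; 325; 404; 618];
[:: 209; 251; 382; 618];
[:: 57; 270; 445; 618];
[:: 19; 77; 351; 618];
[:: 38; 213; 271; 618];
[:: 0; 121; 332; 621];
[:: 114; 330; 377; 621];
[:: 76; 161; 447; 621];
[:: 190; 337; 434; 621];
[:: 209; 275; 394; 621];
[:: 57; 237; 436; 621];
[:: 19; 83; 348; 621];
[:: 38; 180; 244; 621];
[:: 0; 145; 314; 624];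
[:: 114; 297; 383; 624];
[:: 76; 143; 408; 624];
[:: 190; 328; 440; 624];
[:: 209; 257; 385; 624];
[:: 57; 276; 400; 624];
[:: 19; 107; 393; 624];
[:: 38; 219; 250; 624];
[:: 0; 151; 338; 627];
[:: 114; 303; 356; 627];
[:: 76; 167; 441; 627];
[:: 190; 340; 413; 627];
[:: 209; 281; 397; 627];
[:: 57; 243; 448; 627];
[:: 19; 113; 390; 627];
[:: 38; 186; 280; 627];
[:: 0; 160; 317; 630];
[:: 114; 312; 344; 630];
[:: 76; 146; 405; 630];
[:: 190; 301; 401; 630];
[:: 209; 260; 358; 630];
[:: 57; 279; 406; 630];
[:: 19; 65; 357; 630];
[:: 38; 222; 268; 630];
[:: 0; 163; 329; 633];
[:: 114; 315; 359; 633];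
[:: 76; 158; 450; 633];
[:: 190; 307; 416; 633];
[:: 209; 272; 364; 633];
[:: 57; 234; 430; 633];
[:: 19; 68; 384; 633];
[:: 38; 177; 283; 633];
[:: 95; 152; 342; 636];
[:: 133; 361; 399; 636];
[:: 38; 76; 190; 636];
[:: 0; 57; 380; 636];
[:: 19; 323; 437; 636];
[:: 209; 228; 304; 636];
[:: 247; 285; 418; 636];
[:: 114; 171; 266; 636];
[:: 57; 209; 399; 639];
[:: 190; 342; 418; 639];
[:: 228; 380; 437; 639];
[:: 95; 171; 285; 639];
[:: 76; 152; 266; 639];
[:: 0; 323; 361; 639];
[:: 19; 133; 304; 639];
[:: 38; 114; 247; 639];
[:: 0; 78; 120; 213];
[:: 0; 90; 156; 180];
[:: 0; 81; 129; 219];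
[:: 0; 93; 165; 186];
[:: 0; 111; 162; 222];
[:: 0; 60; 123; 177];
[:: 228; 306; 378; 444];
[:: 228; 318; 366; 429];
[:: 228; 309; 375; 426];
[:: 228; 321; 363; 411];
[:: 228; 339; 345; 417];
[:: 228; 288; 396; 438];
[:: 57; 152; 285; 437];
[:: 0; 76; 247; 437];
[:: 0; 152; 190; 399];
[:: 57; 266; 323; 342];
[:: 0; 171; 228; 342];
[:: 114; 190; 323; 380]].

Lemma c62_1 : chk1 62 bb62. Proof. by vm_compute. Qed.
Lemma c62_2 : chk2 62 bb62. Proof. by vm_compute. Qed.
Lemma c62_3 : chk3 62. Proof. by vm_compute. Qed.
Lemma ex186 : exists (V : finType) (G B : {set {set V}}), is_4GDD G B /\ has_type G (nseq 8 57 ++ [:: 186]).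
Proof. exact: (gen c62_1 c62_2 c62_3). Qed.

Definition bb63 : seq (seq nat) := [::
[:: 0; 96; 138; 456];
[:: 19; 77; 154; 456];
[:: 38; 191; 309; 456];
[:: 76; 229; 290; 456];
[:: 152; 286; 423; 456];
[:: 171; 343; 442; 456];
[:: 190; 267; 344; 456];
[:: 266; 381; 404; 456];
[:: 0; 99; 153; 459];
[:: 19; 80; 160; 459];
[:: 38; 194; 324; 459];
[:: 76; 232; 305; 459];
[:: 152; 289; 438; 459];
[:: 171; 346; 400; 459];
[:: 190; 270; 350; 459];
[:: 266; 384; 419; 459];
[:: 0; 102; 168; 462];
[:: 19; 83; 166; 462];
[:: 38; 197; 339; 462];
[:: 76; 235; 320; 462];
[:: 152; 292; 453; 462];
[:: 171; 349; 415; 462];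
[:: 190; 273; 356; 462];
[:: 266; 387; 434; 462];
[:: 0; 111; 156; 465];
[:: 19; 92; 127; 465];
[:: 38; 206; 327; 465];
[:: 76; 244; 308; 465];
[:: 152; 301; 441; 465];
[:: 171; 358; 403; 465];
[:: 190; 282; 374; 465];
[:: 266; 396; 422; 465];
[:: 0; 63; 144; 468];
[:: 19; 101; 145; 468];
[:: 38; 215; 315; 468];
[:: 76; 253; 296; 468];
[:: 152; 310; 429; 468];
[:: 171; 367; 448; 468];
[:: 190; 234; 392; 468];
[:: 266; 348; 410; 468];
[:: 0; 66; 159; 471];
[:: 19; 104; 151; 471];
[:: 38; 218; 330; 471];
[:: 76; 256; 311; 471];
[:: 152; 313; 444; 471];
[:: 171; 370; 406; 471];
[:: 190; 237; 398; 471];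
[:: 266; 351; 425; 471];
[:: 0; 81; 120; 474];
[:: 19; 62; 124; 474];
[:: 38; 176; 291; 474];
[:: 76; 271; 329; 474];
[:: 152; 328; 405; 474];
[:: 171; 385; 424; 474];
[:: 190; 252; 371; 474];
[:: 266; 366; 443; 474];
[:: 0; 87; 150; 477];
[:: 19; 68; 136; 477];
[:: 38; 182; 321; 477];
[:: 76; 277; 302; 477];
[:: 152; 334; 435; 477];
[:: 171; 391; 454; 477];
[:: 190; 258; 383; 477];
[:: 266; 372; 416; 477];
[:: 0; 93; 123; 480];
[:: 19; 74; 148; 480];
[:: 38; 188; 294; 480];
[:: 76; 283; 332; 480];
[:: 152; 340; 408; 480];
[:: 171; 397; 427; 480];
[:: 190; 264; 395; 480];
[:: 266; 378; 446; 480];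
[:: 57; 135; 177; 483];
[:: 76; 134; 211; 483];
[:: 95; 230; 384; 483];
[:: 133; 286; 347; 483];
[:: 209; 343; 402; 483];
[:: 19; 267; 442; 483];
[:: 38; 268; 288; 483];
[:: 0; 305; 404; 483];
[:: 57; 141; 195; 486];
[:: 76; 137; 217; 486];
[:: 95; 236; 396; 486];
[:: 133; 289; 362; 486];
[:: 209; 346; 411; 486];
[:: 19; 270; 400; 486];
[:: 38; 274; 297; 486];
[:: 0; 308; 419; 486];
[:: 57; 147; 213; 489];
[:: 76; 140; 223; 489];
[:: 95; 242; 351; 489];
[:: 133; 292; 377; 489];
[:: 209; 349; 420; 489];
[:: 19; 273; 415; 489];
[:: 38; 280; 306; 489];
[:: 0; 311; 434; 489];
[:: 57; 165; 210; 492];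
[:: 76; 149; 184; 492];
[:: 95; 260; 387; 492];
[:: 133; 301; 365; 492];
[:: 209; 358; 447; 492];
[:: 19; 282; 403; 492];
[:: 38; 241; 333; 492];
[:: 0; 320; 422; 492];
[:: 57; 126; 207; 495];
[:: 76; 158; 202; 495];
[:: 95; 278; 366; 495];
[:: 133; 310; 353; 495];
[:: 209; 367; 417; 495];
[:: 19; 234; 448; 495];
[:: 38; 259; 303; 495];
[:: 0; 329; 410; 495];
[:: 57; 132; 225; 498];
[:: 76; 161; 208; 498];
[:: 95; 284; 378; 498];
[:: 133; 313; 368; 498];
[:: 209; 370; 426; 498];
[:: 19; 237; 406; 498];
[:: 38; 265; 312; 498];
[:: 0; 332; 425; 498];
[:: 57; 162; 201; 501];
[:: 76; 119; 181; 501];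
[:: 95; 257; 381; 501];
[:: 133; 328; 386; 501];
[:: 209; 385; 414; 501];
[:: 19; 252; 424; 501];
[:: 38; 238; 300; 501];
[:: 0; 290; 443; 501];
[:: 57; 117; 180; 504];
[:: 76; 125; 193; 504];
[:: 95; 269; 348; 504];
[:: 133; 334; 359; 504];
[:: 209; 391; 432; 504];
[:: 19; 258; 454; 504];
[:: 38; 250; 318; 504];
[:: 0; 296; 416; 504];
[:: 57; 129; 216; 507];
[:: 76; 131; 205; 507];
[:: 95; 281; 372; 507];
[:: 133; 340; 389; 507];
[:: 209; 397; 450; 507];
[:: 19; 264; 427; 507];
[:: 38; 262; 336; 507];
[:: 0; 302; 446; 507];
[:: 114; 192; 234; 510];
[:: 133; 191; 250; 510];
[:: 0; 134; 326; 510];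
[:: 38; 172; 385; 510];
[:: 19; 248; 402; 510];
[:: 76; 324; 442; 510];
[:: 95; 325; 345; 510];
[:: 57; 362; 422; 510];
[:: 114; 198; 252; 513];
[:: 133; 194; 259; 513];
[:: 0; 137; 335; 513];
[:: 38; 175; 343; 513];
[:: 19; 251; 411; 513];
[:: 76; 327; 400; 513];
[:: 95; 331; 354; 513];
[:: 57; 365; 434; 513];
[:: 114; 204; 270; 516];
[:: 133; 197; 268; 516];
[:: 0; 140; 287; 516];
[:: 38; 178; 358; 516];
[:: 19; 254; 420; 516];
[:: 76; 330; 415; 516];
[:: 95; 337; 363; 516];
[:: 57; 368; 446; 516];
[:: 114; 222; 267; 519];
[:: 133; 206; 238; 519];
[:: 0; 149; 314; 519];
[:: 38; 187; 346; 519];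
[:: 19; 263; 447; 519];
[:: 76; 339; 403; 519];
[:: 95; 298; 390; 519];
[:: 57; 377; 425; 519];
[:: 114; 183; 264; 522];
[:: 133; 215; 265; 522];
[:: 0; 158; 341; 522];
[:: 38; 196; 391; 522];
[:: 19; 272; 417; 522];
[:: 76; 291; 448; 522];
[:: 95; 316; 360; 522];
[:: 57; 386; 404; 522];
[:: 114; 189; 282; 525];
[:: 133; 218; 274; 525];
[:: 0; 161; 293; 525];
[:: 38; 199; 349; 525];
[:: 19; 275; 426; 525];
[:: 76; 294; 406; 525];
[:: 95; 322; 369; 525];
[:: 57; 389; 416; 525];
[:: 114; 219; 258; 528];
[:: 133; 176; 262; 528];
[:: 0; 119; 338; 528];
[:: 38; 214; 367; 528];
[:: 19; 233; 414; 528];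
[:: 76; 309; 424; 528];
[:: 95; 295; 357; 528];
[:: 57; 347; 419; 528];
[:: 114; 174; 237; 531];
[:: 133; 182; 280; 531];
[:: 0; 125; 299; 531];
[:: 38; 220; 397; 531];
[:: 19; 239; 432; 531];
[:: 76; 315; 454; 531];
[:: 95; 307; 375; 531];
[:: 57; 353; 443; 531];
[:: 114; 186; 273; 534];
[:: 133; 188; 241; 534];
[:: 0; 131; 317; 534];
[:: 38; 226; 370; 534];
[:: 19; 245; 450; 534];
[:: 76; 321; 427; 534];
[:: 95; 319; 393; 534];
[:: 57; 359; 410; 534];
[:: 171; 249; 291; 537];
[:: 190; 248; 307; 537];
[:: 57; 191; 383; 537];
[:: 19; 59; 253; 537];
[:: 76; 287; 447; 537];
[:: 133; 381; 442; 537];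
[:: 0; 116; 346; 537];
[:: 38; 153; 401; 537];
[:: 171; 255; 309; 540];
[:: 190; 251; 316; 540];
[:: 57; 194; 392; 540];
[:: 19; 65; 271; 540];
[:: 76; 293; 420; 540];
[:: 133; 384; 400; 540];
[:: 0; 122; 358; 540];
[:: 38; 156; 407; 540];
[:: 171; 261; 327; 543];
[:: 190; 254; 325; 543];
[:: 57; 197; 344; 543];
[:: 19; 71; 232; 543];
[:: 76; 299; 450; 543];
[:: 133; 387; 415; 543];
[:: 0; 128; 370; 543];
[:: 38; 159; 413; 543];
[:: 171; 279; 324; 546];
[:: 190; 263; 295; 546];
[:: 57; 206; 371; 546];
[:: 19; 89; 229; 546];
[:: 76; 317; 426; 546];
[:: 133; 396; 403; 546];
[:: 0; 146; 349; 546];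
[:: 38; 168; 431; 546];
[:: 171; 240; 321; 549];
[:: 190; 272; 322; 549];
[:: 57; 215; 398; 549];
[:: 19; 107; 283; 549];
[:: 76; 335; 402; 549];
[:: 133; 348; 448; 549];
[:: 0; 164; 385; 549];
[:: 38; 120; 449; 549];
[:: 171; 246; 339; 552];
[:: 190; 275; 331; 552];
[:: 57; 218; 350; 552];
[:: 19; 113; 244; 552];
[:: 76; 341; 432; 552];
[:: 133; 351; 406; 552];
[:: 0; 170; 397; 552];
[:: 38; 123; 455; 552];
[:: 171; 276; 315; 555];
[:: 190; 233; 319; 555];
[:: 57; 176; 395; 555];
[:: 19; 86; 277; 555];
[:: 76; 314; 411; 555];
[:: 133; 366; 424; 555];
[:: 0; 143; 343; 555];
[:: 38; 138; 428; 555];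
[:: 171; 231; 294; 558];
[:: 190; 239; 337; 558];
[:: 57; 182; 356; 558];
[:: 19; 98; 256; 558];
[:: 76; 326; 414; 558];
[:: 133; 372; 454; 558];
[:: 0; 155; 367; 558];
[:: 38; 144; 440; 558];
[:: 171; 243; 330; 561];
[:: 190; 245; 298; 561];
[:: 57; 188; 374; 561];
[:: 19; 110; 235; 561];
[:: 76; 338; 417; 561];
[:: 133; 378; 427; 561];
[:: 0; 167; 391; 561];
[:: 38; 150; 452; 561];
[:: 228; 306; 348; 564];
[:: 247; 287; 352; 564];
[:: 38; 135; 269; 564];
[:: 76; 116; 289; 564];
[:: 133; 344; 447; 564];
[:: 0; 172; 442; 564];
[:: 19; 96; 212; 564];
[:: 95; 210; 401; 564];
[:: 228; 312; 366; 567];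
[:: 247; 293; 382; 567];
[:: 38; 141; 278; 567];
[:: 76; 122; 301; 567];
[:: 133; 350; 420; 567];
[:: 0; 175; 400; 567];
[:: 19; 99; 221; 567];
[:: 95; 213; 407; 567];
[:: 228; 318; 384; 570];
[:: 247; 299; 355; 570];
[:: 38; 147; 230; 570];
[:: 76; 128; 313; 570];
[:: 133; 356; 450; 570];
[:: 0; 178; 415; 570];
[:: 19; 102; 173; 570];
[:: 95; 216; 413; 570];
[:: 228; 336; 381; 573];
[:: 247; 317; 388; 573];
[:: 38; 165; 257; 573];
[:: 76; 146; 292; 573];
[:: 133; 374; 426; 573];
[:: 0; 187; 403; 573];
[:: 19; 111; 200; 573];
[:: 95; 225; 431; 573];
[:: 228; 297; 378; 576];
[:: 247; 335; 364; 576];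
[:: 38; 126; 284; 576];
[:: 76; 164; 328; 576];
[:: 133; 392; 402; 576];
[:: 0; 196; 448; 576];
[:: 19; 63; 227; 576];
[:: 95; 177; 449; 576];
[:: 228; 303; 396; 579];
[:: 247; 341; 394; 579];
[:: 38; 132; 236; 579];
[:: 76; 170; 340; 579];
[:: 133; 398; 432; 579];
[:: 0; 199; 406; 579];
[:: 19; 66; 179; 579];
[:: 95; 180; 455; 579];
[:: 228; 333; 372; 582];
[:: 247; 314; 373; 582];
[:: 38; 162; 281; 582];
[:: 76; 143; 286; 582];
[:: 133; 371; 411; 582];
[:: 0; 214; 424; 582];
[:: 19; 81; 224; 582];
[:: 95; 195; 428; 582];
[:: 228; 288; 351; 585];
[:: 247; 326; 376; 585];
[:: 38; 117; 242; 585];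
[:: 76; 155; 310; 585];
[:: 133; 383; 414; 585];
[:: 0; 220; 454; 585];
[:: 19; 87; 185; 585];
[:: 95; 201; 440; 585];
[:: 228; 300; 387; 588];
[:: 247; 338; 379; 588];
[:: 38; 129; 260; 588];
[:: 76; 167; 334; 588];
[:: 133; 395; 417; 588];
[:: 0; 226; 427; 588];
[:: 19; 93; 203; 588];
[:: 95; 207; 452; 588];
[:: 0; 324; 384; 591];
[:: 19; 325; 371; 591];
[:: 95; 192; 326; 591];
[:: 133; 173; 346; 591];
[:: 38; 211; 447; 591];
[:: 57; 229; 403; 591];
[:: 76; 135; 257; 591];
[:: 152; 267; 401; 591];
[:: 0; 327; 396; 594];
[:: 19; 331; 344; 594];
[:: 95; 198; 335; 594];
[:: 133; 179; 358; 594];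
[:: 38; 217; 420; 594];
[:: 57; 232; 415; 594];
[:: 76; 141; 230; 594];
[:: 152; 270; 407; 594];
[:: 0; 330; 351; 597];
[:: 19; 337; 374; 597];
[:: 95; 204; 287; 597];
[:: 133; 185; 370; 597];
[:: 38; 223; 450; 597];
[:: 57; 235; 427; 597];
[:: 76; 147; 260; 597];
[:: 152; 273; 413; 597];
[:: 0; 339; 387; 600];
[:: 19; 298; 350; 600];
[:: 95; 222; 314; 600];
[:: 133; 203; 349; 600];
[:: 38; 184; 426; 600];
[:: 57; 244; 406; 600];
[:: 76; 165; 236; 600];
[:: 152; 282; 431; 600];
[:: 0; 291; 366; 603];
[:: 19; 316; 383; 603];
[:: 95; 183; 341; 603];
[:: 133; 221; 385; 603];
[:: 38; 202; 402; 603];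
[:: 57; 253; 442; 603];
[:: 76; 126; 269; 603];
[:: 152; 234; 449; 603];
[:: 0; 294; 378; 606];
[:: 19; 322; 356; 606];
[:: 95; 189; 293; 606];
[:: 133; 227; 397; 606];
[:: 38; 208; 432; 606];
[:: 57; 256; 454; 606];
[:: 76; 132; 242; 606];
[:: 152; 237; 455; 606];
[:: 0; 309; 381; 609];
[:: 19; 295; 392; 609];
[:: 95; 219; 338; 609];
[:: 133; 200; 343; 609];
[:: 38; 181; 411; 609];
[:: 57; 271; 400; 609];
[:: 76; 162; 278; 609];
[:: 152; 252; 428; 609];
[:: 0; 315; 348; 612];
[:: 19; 307; 395; 612];
[:: 95; 174; 299; 612];
[:: 133; 212; 367; 612];
[:: 38; 193; 414; 612];
[:: 57; 277; 424; 612];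
[:: 76; 117; 281; 612];
[:: 152; 258; 440; 612];
[:: 0; 321; 372; 615];
[:: 19; 319; 398; 615];
[:: 95; 186; 317; 615];
[:: 133; 224; 391; 615];
[:: 38; 205; 417; 615];
[:: 57; 283; 448; 615];
[:: 76; 129; 284; 615];
[:: 152; 264; 452; 615];
[:: 0; 78; 345; 618];
[:: 38; 97; 352; 618];
[:: 152; 249; 371; 618];
[:: 19; 211; 257; 618];
[:: 95; 268; 447; 618];
[:: 114; 286; 421; 618];
[:: 133; 192; 314; 618];
[:: 209; 306; 428; 618];
[:: 0; 84; 354; 621];
[:: 38; 103; 382; 621];
[:: 152; 255; 344; 621];
[:: 19; 217; 230; 621];
[:: 95; 274; 420; 621];
[:: 114; 289; 430; 621];
[:: 133; 198; 287; 621];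
[:: 209; 312; 401; 621];
[:: 0; 90; 363; 624];
[:: 38; 109; 355; 624];
[:: 152; 261; 374; 624];
[:: 19; 223; 260; 624];
[:: 95; 280; 450; 624];
[:: 114; 292; 439; 624];
[:: 133; 204; 317; 624];
[:: 209; 318; 431; 624];
[:: 0; 108; 390; 627];
[:: 38; 70; 388; 627];
[:: 152; 279; 350; 627];
[:: 19; 184; 236; 627];
[:: 95; 241; 426; 627];
[:: 114; 301; 409; 627];
[:: 133; 222; 293; 627];
[:: 209; 336; 407; 627];
[:: 0; 69; 360; 630];
[:: 38; 88; 364; 630];
[:: 152; 240; 383; 630];
[:: 19; 202; 269; 630];
[:: 95; 259; 402; 630];
[:: 114; 310; 436; 630];
[:: 133; 183; 326; 630];
[:: 209; 297; 440; 630];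
[:: 0; 75; 369; 633];
[:: 38; 94; 394; 633];
[:: 152; 246; 356; 633];
[:: 19; 208; 242; 633];
[:: 95; 265; 432; 633];
[:: 114; 313; 445; 633];
[:: 133; 189; 299; 633];
[:: 209; 303; 413; 633];
[:: 0; 105; 357; 636];
[:: 38; 67; 373; 636];
[:: 152; 276; 392; 636];
[:: 19; 181; 278; 636];
[:: 95; 238; 411; 636];
[:: 114; 328; 433; 636];
[:: 133; 219; 335; 636];
[:: 209; 333; 449; 636];
[:: 0; 60; 375; 639];
[:: 38; 79; 376; 639];
[:: 152; 231; 395; 639];
[:: 19; 193; 281; 639];
[:: 95; 250; 414; 639];
[:: 114; 334; 451; 639];
[:: 133; 174; 338; 639];
[:: 209; 288; 452; 639];
[:: 0; 72; 393; 642];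
[:: 38; 91; 379; 642];
[:: 152; 243; 398; 642];
[:: 19; 205; 284; 642];
[:: 95; 262; 417; 642];
[:: 114; 340; 412; 642];
[:: 133; 186; 341; 642];
[:: 209; 300; 455; 642];
[:: 57; 133; 209; 380];
[:: 0; 209; 361; 418];
[:: 0; 190; 266; 380];
[:: 57; 171; 266; 418];
[:: 0; 114; 171; 304];
[:: 57; 190; 247; 285];
[:: 114; 209; 323; 437];
[:: 0; 76; 133; 247];
[:: 0; 152; 228; 399];
[:: 228; 285; 380; 418];
[:: 114; 266; 285; 342];
[:: 0; 95; 285; 437];
[:: 0; 57; 323; 342];
[:: 57; 152; 361; 437]].

Lemma c63_1 : chk1 63 bb63. Proof. by vm_compute. Qed.
Lemma c63_2 : chk2 63 bb63. Proof. by vm_compute. Qed.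
Lemma c63_3 : chk3 63. Proof. by vm_compute. Qed.
Lemma ex189 : exists (V : finType) (G B : {set {set V}}), is_4GDD G B /\ has_type G (nseq 8 57 ++ [:: 189]).
Proof. exact: (gen c63_1 c63_2 c63_3). Qed.

Definition bb64 : seq (seq nat) := [::
[:: 0; 96; 138; 456];
[:: 19; 77; 154; 456];
[:: 38; 191; 309; 456];
[:: 76; 229; 290; 456];
[:: 152; 286; 423; 456];
[:: 171; 343; 442; 456];
[:: 190; 267; 344; 456];
[:: 266; 381; 404; 456];
[:: 0; 99; 153; 459];
[:: 19; 80; 160; 459];
[:: 38; 194; 324; 459];
[:: 76; 232; 305; 459];
[:: 152; 289; 438; 459];
[:: 171; 346; 400; 459];
[:: 190; 270; 350; 459];
[:: 266; 384; 419; 459];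
[:: 0; 102; 168; 462];
[:: 19; 83; 166; 462];
[:: 38; 197; 339; 462];
[:: 76; 235; 320; 462];
[:: 152; 292; 453; 462];
[:: 171; 349; 415; 462];
[:: 190; 273; 356; 462];
[:: 266; 387; 434; 462];
[:: 0; 111; 156; 465];
[:: 19; 92; 127; 465];
[:: 38; 206; 327; 465];
[:: 76; 244; 308; 465];
[:: 152; 301; 441; 465];
[:: 171; 358; 403; 465];
[:: 190; 282; 374; 465];
[:: 266; 396; 422; 465];
[:: 0; 63; 144; 468];
[:: 19; 101; 145; 468];
[:: 38; 215; 315; 468];
[:: 76; 253; 296; 468];
[:: 152; 310; 429; 468];
[:: 171; 367; 448; 468];
[:: 190; 234; 392; 468];
[:: 266; 348; 410; 468];
[:: 0; 66; 159; 471];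
[:: 19; 104; 151; 471];
[:: 38; 218; 330; 471];
[:: 76; 256; 311; 471];
[:: 152; 313; 444; 471];
[:: 171; 370; 406; 471];
[:: 190; 237; 398; 471];
[:: 266; 351; 425; 471];
[:: 0; 81; 120; 474];
[:: 19; 62; 124; 474];
[:: 38; 176; 291; 474];
[:: 76; 271; 329; 474];
[:: 152; 328; 405; 474];
[:: 171; 385; 424; 474];
[:: 190; 252; 371; 474];
[:: 266; 366; 443; 474];
[:: 0; 87; 150; 477];
[:: 19; 68; 136; 477];
[:: 38; 182; 321; 477];
[:: 76; 277; 302; 477];
[:: 152; 334; 435; 477];
[:: 171; 391; 454; 477];
[:: 190; 258; 383; 477];
[:: 266; 372; 416; 477];
[:: 0; 93; 123; 480];
[:: 19; 74; 148; 480];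
[:: 38; 188; 294; 480];
[:: 76; 283; 332; 480];
[:: 152; 340; 408; 480];
[:: 171; 397; 427; 480];
[:: 190; 264; 395; 480];
[:: 266; 378; 446; 480];
[:: 57; 135; 177; 483];
[:: 76; 134; 211; 483];
[:: 95; 230; 384; 483];
[:: 133; 286; 347; 483];
[:: 209; 343; 402; 483];
[:: 19; 267; 442; 483];
[:: 38; 268; 288; 483];
[:: 0; 305; 404; 483];
[:: 57; 141; 195; 486];
[:: 76; 137; 217; 486];
[:: 95; 236; 396; 486];
[:: 133; 289; 362; 486];
[:: 209; 346; 411; 486];
[:: 19; 270; 400; 486];
[:: 38; 274; 297; 486];
[:: 0; 308; 419; 486];
[:: 57; 147; 213; 489];
[:: 76; 140; 223; 489];
[:: 95; 242; 351; 489];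
[:: 133; 292; 377; 489];
[:: 209; 349; 420; 489];
[:: 19; 273; 415; 489];
[:: 38; 280; 306; 489];
[:: 0; 311; 434; 489];
[:: 57; 165; 210; 492];
[:: 76; 149; 184; 492];
[:: 95; 260; 387; 492];
[:: 133; 301; 365; 492];
[:: 209; 358; 447; 492];
[:: 19; 282; 403; 492];
[:: 38; 241; 333; 492];
[:: 0; 320; 422; 492];
[:: 57; 126; 207; 495];
[:: 76; 158; 202; 495];
[:: 95; 278; 366; 495];
[:: 133; 310; 353; 495];
[:: 209; 367; 417; 495];
[:: 19; 234; 448; 495];
[:: 38; 259; 303; 495];
[:: 0; 329; 410; 495];
[:: 57; 132; 225; 498];
[:: 76; 161; 208; 498];
[:: 95; 284; 378; 498];
[:: 133; 313; 368; 498];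
[:: 209; 370; 426; 498];
[:: 19; 237; 406; 498];
[:: 38; 265; 312; 498];
[:: 0; 332; 425; 498];
[:: 57; 162; 201; 501];
[:: 76; 119; 181; 501];
[:: 95; 257; 381; 501];
[:: 133; 328; 386; 501];
[:: 209; 385; 414; 501];
[:: 19; 252; 424; 501];
[:: 38; 238; 300; 501];
[:: 0; 290; 443; 501];
[:: 57; 117; 180; 504];
[:: 76; 125; 193; 504];
[:: 95; 269; 348; 504];
[:: 133; 334; 359; 504];
[:: 209; 391; 432; 504];
[:: 19; 258; 454; 504];
[:: 38; 250; 318; 504];
[:: 0; 296; 416; 504];
[:: 57; 129; 216; 507];
[:: 76; 131; 205; 507];
[:: 95; 281; 372; 507];
[:: 133; 340; 389; 507];
[:: 209; 397; 450; 507];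
[:: 19; 264; 427; 507];
[:: 38; 262; 336; 507];
[:: 0; 302; 446; 507];
[:: 114; 192; 234; 510];
[:: 133; 191; 250; 510];
[:: 0; 134; 326; 510];
[:: 38; 172; 385; 510];
[:: 19; 248; 402; 510];
[:: 76; 324; 442; 510];
[:: 95; 325; 345; 510];
[:: 57; 362; 422; 510];
[:: 114; 198; 252; 513];
[:: 133; 194; 259; 513];
[:: 0; 137; 335; 513];
[:: 38; 175; 343; 513];
[:: 19; 251; 411; 513];
[:: 76; 327; 400; 513];
[:: 95; 331; 354; 513];
[:: 57; 365; 434; 513];
[:: 114; 204; 270; 516];
[:: 133; 197; 268; 516];
[:: 0; 140; 287; 516];
[:: 38; 178; 358; 516];
[:: 19; 254; 420; 516];
[:: 76; 330; 415; 516];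
[:: 95; 337; 363; 516];
[:: 57; 368; 446; 516];
[:: 114; 222; 267; 519];
[:: 133; 206; 238; 519];
[:: 0; 149; 314; 519];
[:: 38; 187; 346; 519];
[:: 19; 263; 447; 519];
[:: 76; 339; 403; 519];
[:: 95; 298; 390; 519];
[:: 57; 377; 425; 519];
[:: 114; 183; 264; 522];
[:: 133; 215; 265; 522];
[:: 0; 158; 341; 522];
[:: 38; 196; 391; 522];
[:: 19; 272; 417; 522];
[:: 76; 291; 448; 522];
[:: 95; 316; 360; 522];
[:: 57; 386; 404; 522];
[:: 114; 189; 282; 525];
[:: 133; 218; 274; 525];
[:: 0; 161; 293; 525];
[:: 38; 199; 349; 525];
[:: 19; 275; 426; 525];
[:: 76; 294; 406; 525];
[:: 95; 322; 369; 525];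
[:: 57; 389; 416; 525];
[:: 114; 219; 258; 528];
[:: 133; 176; 262; 528];
[:: 0; 119; 338; 528];
[:: 38; 214; 367; 528];
[:: 19; 233; 414; 528];
[:: 76; 309; 424; 528];
[:: 95; 295; 357; 528];
[:: 57; 347; 419; 528];
[:: 114; 174; 237; 531];
[:: 133; 182; 280; 531];
[:: 0; 125; 299; 531];
[:: 38; 220; 397; 531];
[:: 19; 239; 432; 531];
[:: 76; 315; 454; 531];
[:: 95; 307; 375; 531];
[:: 57; 353; 443; 531];
[:: 114; 186; 273; 534];
[:: 133; 188; 241; 534];
[:: 0; 131; 317; 534];
[:: 38; 226; 370; 534];
[:: 19; 245; 450; 534];
[:: 76; 321; 427; 534];
[:: 95; 319; 393; 534];
[:: 57; 359; 410; 534];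
[:: 171; 249; 291; 537];
[:: 190; 248; 307; 537];
[:: 57; 191; 383; 537];
[:: 19; 59; 253; 537];
[:: 76; 287; 447; 537];
[:: 133; 381; 442; 537];
[:: 0; 116; 346; 537];
[:: 38; 153; 401; 537];
[:: 171; 255; 309; 540];
[:: 190; 251; 316; 540];
[:: 57; 194; 392; 540];
[:: 19; 65; 271; 540];
[:: 76; 293; 420; 540];
[:: 133; 384; 400; 540];
[:: 0; 122; 358; 540];
[:: 38; 156; 407; 540];
[:: 171; 261; 327; 543];
[:: 190; 254; 325; 543];
[:: 57; 197; 344; 543];
[:: 19; 71; 232; 543];
[:: 76; 299; 450; 543];
[:: 133; 387; 415; 543];
[:: 0; 128; 370; 543];
[:: 38; 159; 413; 543];
[:: 171; 279; 324; 546];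
[:: 190; 263; 295; 546];
[:: 57; 206; 371; 546];
[:: 19; 89; 229; 546];
[:: 76; 317; 426; 546];
[:: 133; 396; 403; 546];
[:: 0; 146; 349; 546];
[:: 38; 168; 431; 546];
[:: 171; 240; 321; 549];
[:: 190; 272; 322; 549];
[:: 57; 215; 398; 549];
[:: 19; 107; 283; 549];
[:: 76; 335; 402; 549];
[:: 133; 348; 448; 549];
[:: 0; 164; 385; 549];
[:: 38; 120; 449; 549];
[:: 171; 246; 339; 552];
[:: 190; 275; 331; 552];
[:: 57; 218; 350; 552];
[:: 19; 113; 244; 552];
[:: 76; 341; 432; 552];
[:: 133; 351; 406; 552];
[:: 0; 170; 397; 552];
[:: 38; 123; 455; 552];
[:: 171; 276; 315; 555];
[:: 190; 233; 319; 555];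
[:: 57; 176; 395; 555];
[:: 19; 86; 277; 555];
[:: 76; 314; 411; 555];
[:: 133; 366; 424; 555];
[:: 0; 143; 343; 555];
[:: 38; 138; 428; 555];
[:: 171; 231; 294; 558];
[:: 190; 239; 337; 558];
[:: 57; 182; 356; 558];
[:: 19; 98; 256; 558];
[:: 76; 326; 414; 558];
[:: 133; 372; 454; 558];
[:: 0; 155; 367; 558];
[:: 38; 144; 440; 558];
[:: 171; 243; 330; 561];
[:: 190; 245; 298; 561];
[:: 57; 188; 374; 561];
[:: 19; 110; 235; 561];
[:: 76; 338; 417; 561];
[:: 133; 378; 427; 561];
[:: 0; 167; 391; 561];
[:: 38; 150; 452; 561];
[:: 228; 306; 348; 564];
[:: 247; 287; 352; 564];
[:: 38; 135; 269; 564];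
[:: 76; 116; 289; 564];
[:: 133; 344; 447; 564];
[:: 0; 172; 442; 564];
[:: 19; 96; 212; 564];
[:: 95; 210; 401; 564];
[:: 228; 312; 366; 567];
[:: 247; 293; 382; 567];
[:: 38; 141; 278; 567];
[:: 76; 122; 301; 567];
[:: 133; 350; 420; 567];
[:: 0; 175; 400; 567];
[:: 19; 99; 221; 567];
[:: 95; 213; 407; 567];
[:: 228; 318; 384; 570];
[:: 247; 299; 355; 570];
[:: 38; 147; 230; 570];
[:: 76; 128; 313; 570];
[:: 133; 356; 450; 570];
[:: 0; 178; 415; 570];
[:: 19; 102; 173; 570];
[:: 95; 216; 413; 570];
[:: 228; 336; 381; 573];
[:: 247; 317; 388; 573];
[:: 38; 165; 257; 573];
[:: 76; 146; 292; 573];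
[:: 133; 374; 426; 573];
[:: 0; 187; 403; 573];
[:: 19; 111; 200; 573];
[:: 95; 225; 431; 573];
[:: 228; 297; 378; 576];
[:: 247; 335; 364; 576];
[:: 38; 126; 284; 576];
[:: 76; 164; 328; 576];
[:: 133; 392; 402; 576];
[:: 0; 196; 448; 576];
[:: 19; 63; 227; 576];
[:: 95; 177; 449; 576];
[:: 228; 303; 396; 579];
[:: 247; 341; 394; 579];
[:: 38; 132; 236; 579];
[:: 76; 170; 340; 579];
[:: 133; 398; 432; 579];
[:: 0; 199; 406; 579];
[:: 19; 66; 179; 579];
[:: 95; 180; 455; 579];
[:: 228; 333; 372; 582];
[:: 247; 314; 373; 582];
[:: 38; 162; 281; 582];
[:: 76; 143; 286; 582];
[:: 133; 371; 411; 582];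
[:: 0; 214; 424; 582];
[:: 19; 81; 224; 582];
[:: 95; 195; 428; 582];
[:: 228; 288; 351; 585];
[:: 247; 326; 376; 585];
[:: 38; 117; 242; 585];
[:: 76; 155; 310; 585];
[:: 133; 383; 414; 585];
[:: 0; 220; 454; 585];
[:: 19; 87; 185; 585];
[:: 95; 201; 440; 585];
[:: 228; 300; 387; 588];
[:: 247; 338; 379; 588];
[:: 38; 129; 260; 588];
[:: 76; 167; 334; 588];
[:: 133; 395; 417; 588];
[:: 0; 226; 427; 588];
[:: 19; 93; 203; 588];
[:: 95; 207; 452; 588];
[:: 0; 324; 384; 591];
[:: 19; 325; 371; 591];
[:: 95; 192; 326; 591];
[:: 133; 173; 346; 591];
[:: 38; 211; 447; 591];
[:: 57; 229; 403; 591];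
[:: 76; 135; 257; 591];
[:: 152; 267; 401; 591];
[:: 0; 327; 396; 594];
[:: 19; 331; 344; 594];
[:: 95; 198; 335; 594];
[:: 133; 179; 358; 594];
[:: 38; 217; 420; 594];
[:: 57; 232; 415; 594];
[:: 76; 141; 230; 594];
[:: 152; 270; 407; 594];
[:: 0; 330; 351; 597];
[:: 19; 337; 374; 597];
[:: 95; 204; 287; 597];
[:: 133; 185; 370; 597];
[:: 38; 223; 450; 597];
[:: 57; 235; 427; 597];
[:: 76; 147; 260; 597];
[:: 152; 273; 413; 597];
[:: 0; 339; 387; 600];
[:: 19; 298; 350; 600];
[:: 95; 222; 314; 600];
[:: 133; 203; 349; 600];
[:: 38; 184; 426; 600];
[:: 57; 244; 406; 600];
[:: 76; 165; 236; 600];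
[:: 152; 282; 431; 600];
[:: 0; 291; 366; 603];
[:: 19; 316; 383; 603];
[:: 95; 183; 341; 603];
[:: 133; 221; 385; 603];
[:: 38; 202; 402; 603];
[:: 57; 253; 442; 603];
[:: 76; 126; 269; 603];
[:: 152; 234; 449; 603];
[:: 0; 294; 378; 606];
[:: 19; 322; 356; 606];
[:: 95; 189; 293; 606];
[:: 133; 227; 397; 606];
[:: 38; 208; 432; 606];
[:: 57; 256; 454; 606];
[:: 76; 132; 242; 606];
[:: 152; 237; 455; 606];
[:: 0; 309; 381; 609];
[:: 19; 295; 392; 609];
[:: 95; 219; 338; 609];
[:: 133; 200; 343; 609];
[:: 38; 181; 411; 609];
[:: 57; 271; 400; 609];
[:: 76; 162; 278; 609];
[:: 152; 252; 428; 609];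
[:: 0; 315; 348; 612];
[:: 19; 307; 395; 612];
[:: 95; 174; 299; 612];
[:: 133; 212; 367; 612];
[:: 38; 193; 414; 612];
[:: 57; 277; 424; 612];
[:: 76; 117; 281; 612];
[:: 152; 258; 440; 612];
[:: 0; 321; 372; 615];
[:: 19; 319; 398; 615];
[:: 95; 186; 317; 615];
[:: 133; 224; 391; 615];
[:: 38; 205; 417; 615];
[:: 57; 283; 448; 615];
[:: 76; 129; 284; 615];
[:: 152; 264; 452; 615];
[:: 0; 78; 345; 618];
[:: 38; 97; 352; 618];
[:: 152; 249; 371; 618];
[:: 19; 211; 257; 618];
[:: 95; 268; 447; 618];
[:: 114; 286; 421; 618];
[:: 133; 192; 314; 618];
[:: 209; 306; 428; 618];
[:: 0; 84; 354; 621];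
[:: 38; 103; 382; 621];
[:: 152; 255; 344; 621];
[:: 19; 217; 230; 621];
[:: 95; 274; 420; 621];
[:: 114; 289; 430; 621];
[:: 133; 198; 287; 621];
[:: 209; 312; 401; 621];
[:: 0; 90; 363; 624];
[:: 38; 109; 355; 624];
[:: 152; 261; 374; 624];
[:: 19; 223; 260; 624];
[:: 95; 280; 450; 624];
[:: 114; 292; 439; 624];
[:: 133; 204; 317; 624];
[:: 209; 318; 431; 624];
[:: 0; 108; 390; 627];
[:: 38; 70; 388; 627];
[:: 152; 279; 350; 627];
[:: 19; 184; 236; 627];
[:: 95; 241; 426; 627];
[:: 114; 301; 409; 627];
[:: 133; 222; 293; 627];
[:: 209; 336; 407; 627];
[:: 0; 69; 360; 630];
[:: 38; 88; 364; 630];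
[:: 152; 240; 383; 630];
[:: 19; 202; 269; 630];
[:: 95; 259; 402; 630];
[:: 114; 310; 436; 630];
[:: 133; 183; 326; 630];
[:: 209; 297; 440; 630];
[:: 0; 75; 369; 633];
[:: 38; 94; 394; 633];
[:: 152; 246; 356; 633];
[:: 19; 208; 242; 633];
[:: 95; 265; 432; 633];
[:: 114; 313; 445; 633];
[:: 133; 189; 299; 633];
[:: 209; 303; 413; 633];
[:: 0; 105; 357; 636];
[:: 38; 67; 373; 636];
[:: 152; 276; 392; 636];
[:: 19; 181; 278; 636];
[:: 95; 238; 411; 636];
[:: 114; 328; 433; 636];
[:: 133; 219; 335; 636];
[:: 209; 333; 449; 636];
[:: 0; 60; 375; 639];
[:: 38; 79; 376; 639];
[:: 152; 231; 395; 639];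
[:: 19; 193; 281; 639];
[:: 95; 250; 414; 639];
[:: 114; 334; 451; 639];
[:: 133; 174; 338; 639];
[:: 209; 288; 452; 639];
[:: 0; 72; 393; 642];
[:: 38; 91; 379; 642];
[:: 152; 243; 398; 642];
[:: 19; 205; 284; 642];
[:: 95; 262; 417; 642];
[:: 114; 340; 412; 642];
[:: 133; 186; 341; 642];
[:: 209; 300; 455; 642];
[:: 95; 152; 304; 645];
[:: 76; 323; 342; 645];
[:: 57; 190; 437; 645];
[:: 247; 285; 399; 645];
[:: 0; 209; 361; 645];
[:: 133; 228; 380; 645];
[:: 38; 171; 266; 645];
[:: 19; 114; 418; 645];
[:: 0; 76; 266; 437];
[:: 57; 266; 342; 399];
[:: 0; 57; 171; 285];
[:: 57; 152; 209; 228];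
[:: 0; 95; 114; 342];
[:: 0; 133; 247; 304];
[:: 171; 228; 304; 342];
[:: 0; 323; 380; 418];
[:: 114; 209; 304; 437];
[:: 114; 190; 380; 399]].

Lemma c64_1 : chk1 64 bb64. Proof. by vm_compute. Qed.
Lemma c64_2 : chk2 64 bb64. Proof. by vm_compute. Qed.
Lemma c64_3 : chk3 64. Proof. by vm_compute. Qed.
Lemma ex192 : exists (V : finType) (G B : {set {set V}}), is_4GDD G B /\ has_type G (nseq 8 57 ++ [:: 192]).
Proof. exact: (gen c64_1 c64_2 c64_3). Qed.

Definition bb65 : seq (seq nat) := [::
[:: 0; 96; 138; 456];
[:: 19; 77; 154; 456];
[:: 38; 191; 309; 456];
[:: 76; 229; 290; 456];
[:: 152; 286; 423; 456];
[:: 171; 343; 442; 456];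
[:: 190; 267; 344; 456];
[:: 266; 381; 404; 456];
[:: 0; 99; 153; 459];
[:: 19; 80; 160; 459];
[:: 38; 194; 324; 459];
[:: 76; 232; 305; 459];
[:: 152; 289; 438; 459];
[:: 171; 346; 400; 459];
[:: 190; 270; 350; 459];
[:: 266; 384; 419; 459];
[:: 0; 102; 168; 462];
[:: 19; 83; 166; 462];
[:: 38; 197; 339; 462];
[:: 76; 235; 320; 462];
[:: 152; 292; 453; 462];
[:: 171; 349; 415; 462];
[:: 190; 273; 356; 462];
[:: 266; 387; 434; 462];
[:: 0; 111; 156; 465];
[:: 19; 92; 127; 465];
[:: 38; 206; 327; 465];
[:: 76; 244; 308; 465];
[:: 152; 301; 441; 465];
[:: 171; 358; 403; 465];
[:: 190; 282; 374; 465];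
[:: 266; 396; 422; 465];
[:: 0; 63; 144; 468];
[:: 19; 101; 145; 468];
[:: 38; 215; 315; 468];
[:: 76; 253; 296; 468];
[:: 152; 310; 429; 468];
[:: 171; 367; 448; 468];
[:: 190; 234; 392; 468];
[:: 266; 348; 410; 468];
[:: 0; 66; 159; 471];
[:: 19; 104; 151; 471];
[:: 38; 218; 330; 471];
[:: 76; 256; 311; 471];
[:: 152; 313; 444; 471];
[:: 171; 370; 406; 471];
[:: 190; 237; 398; 471];
[:: 266; 351; 425; 471];
[:: 0; 81; 120; 474];
[:: 19; 62; 124; 474];
[:: 38; 176; 291; 474];
[:: 76; 271; 329; 474];
[:: 152; 328; 405; 474];
[:: 171; 385; 424; 474];
[:: 190; 252; 371; 474];
[:: 266; 366; 443; 474];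
[:: 0; 87; 150; 477];
[:: 19; 68; 136; 477];
[:: 38; 182; 321; 477];
[:: 76; 277; 302; 477];
[:: 152; 334; 435; 477];
[:: 171; 391; 454; 477];
[:: 190; 258; 383; 477];
[:: 266; 372; 416; 477];
[:: 0; 93; 123; 480];
[:: 19; 74; 148; 480];
[:: 38; 188; 294; 480];
[:: 76; 283; 332; 480];
[:: 152; 340; 408; 480];
[:: 171; 397; 427; 480];
[:: 190; 264; 395; 480];
[:: 266; 378; 446; 480];
[:: 57; 135; 177; 483];
[:: 76; 134; 211; 483];
[:: 95; 230; 384; 483];
[:: 133; 286; 347; 483];
[:: 209; 343; 402; 483];
[:: 19; 267; 442; 483];
[:: 38; 268; 288; 483];
[:: 0; 305; 404; 483];
[:: 57; 141; 195; 486];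
[:: 76; 137; 217; 486];
[:: 95; 236; 396; 486];
[:: 133; 289; 362; 486];
[:: 209; 346; 411; 486];
[:: 19; 270; 400; 486];
[:: 38; 274; 297; 486];
[:: 0; 308; 419; 486];
[:: 57; 147; 213; 489];
[:: 76; 140; 223; 489];
[:: 95; 242; 351; 489];
[:: 133; 292; 377; 489];
[:: 209; 349; 420; 489];
[:: 19; 273; 415; 489];
[:: 38; 280; 306; 489];
[:: 0; 311; 434; 489];
[:: 57; 165; 210; 492];
[:: 76; 149; 184; 492];
[:: 95; 260; 387; 492];
[:: 133; 301; 365; 492];
[:: 209; 358; 447; 492];
[:: 19; 282; 403; 492];
[:: 38; 241; 333; 492];
[:: 0; 320; 422; 492];
[:: 57; 126; 207; 495];
[:: 76; 158; 202; 495];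
[:: 95; 278; 366; 495];
[:: 133; 310; 353; 495];
[:: 209; 367; 417; 495];
[:: 19; 234; 448; 495];
[:: 38; 259; 303; 495];
[:: 0; 329; 410; 495];
[:: 57; 132; 225; 498];
[:: 76; 161; 208; 498];
[:: 95; 284; 378; 498];
[:: 133; 313; 368; 498];
[:: 209; 370; 426; 498];
[:: 19; 237; 406; 498];
[:: 38; 265; 312; 498];
[:: 0; 332; 425; 498];
[:: 57; 162; 201; 501];
[:: 76; 119; 181; 501];
[:: 95; 257; 381; 501];
[:: 133; 328; 386; 501];
[:: 209; 385; 414; 501];
[:: 19; 252; 424; 501];
[:: 38; 238; 300; 501];
[:: 0; 290; 443; 501];
[:: 57; 117; 180; 504];
[:: 76; 125; 193; 504];
[:: 95; 269; 348; 504];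
[:: 133; 334; 359; 504];
[:: 209; 391; 432; 504];
[:: 19; 258; 454; 504];
[:: 38; 250; 318; 504];
[:: 0; 296; 416; 504];
[:: 57; 129; 216; 507];
[:: 76; 131; 205; 507];
[:: 95; 281; 372; 507];
[:: 133; 340; 389; 507];
[:: 209; 397; 450; 507];
[:: 19; 264; 427; 507];
[:: 38; 262; 336; 507];
[:: 0; 302; 446; 507];
[:: 114; 192; 234; 510];
[:: 133; 191; 250; 510];
[:: 0; 134; 326; 510];
[:: 38; 172; 385; 510];
[:: 19; 248; 402; 510];
[:: 76; 324; 442; 510];
[:: 95; 325; 345; 510];
[:: 57; 362; 422; 510];
[:: 114; 198; 252; 513];
[:: 133; 194; 259; 513];
[:: 0; 137; 335; 513];
[:: 38; 175; 343; 513];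
[:: 19; 251; 411; 513];
[:: 76; 327; 400; 513];
[:: 95; 331; 354; 513];
[:: 57; 365; 434; 513];
[:: 114; 204; 270; 516];
[:: 133; 197; 268; 516];
[:: 0; 140; 287; 516];
[:: 38; 178; 358; 516];
[:: 19; 254; 420; 516];
[:: 76; 330; 415; 516];
[:: 95; 337; 363; 516];
[:: 57; 368; 446; 516];
[:: 114; 222; 267; 519];
[:: 133; 206; 238; 519];
[:: 0; 149; 314; 519];
[:: 38; 187; 346; 519];
[:: 19; 263; 447; 519];
[:: 76; 339; 403; 519];
[:: 95; 298; 390; 519];
[:: 57; 377; 425; 519];
[:: 114; 183; 264; 522];
[:: 133; 215; 265; 522];
[:: 0; 158; 341; 522];
[:: 38; 196; 391; 522];
[:: 19; 272; 417; 522];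
[:: 76; 291; 448; 522];
[:: 95; 316; 360; 522];
[:: 57; 386; 404; 522];
[:: 114; 189; 282; 525];
[:: 133; 218; 274; 525];
[:: 0; 161; 293; 525];
[:: 38; 199; 349; 525];
[:: 19; 275; 426; 525];
[:: 76; 294; 406; 525];
[:: 95; 322; 369; 525];
[:: 57; 389; 416; 525];
[:: 114; 219; 258; 528];
[:: 133; 176; 262; 528];
[:: 0; 119; 338; 528];
[:: 38; 214; 367; 528];
[:: 19; 233; 414; 528];
[:: 76; 309; 424; 528];
[:: 95; 295; 357; 528];
[:: 57; 347; 419; 528];
[:: 114; 174; 237; 531];
[:: 133; 182; 280; 531];
[:: 0; 125; 299; 531];
[:: 38; 220; 397; 531];
[:: 19; 239; 432; 531];
[:: 76; 315; 454; 531];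
[:: 95; 307; 375; 531];
[:: 57; 353; 443; 531];
[:: 114; 186; 273; 534];
[:: 133; 188; 241; 534];
[:: 0; 131; 317; 534];
[:: 38; 226; 370; 534];
[:: 19; 245; 450; 534];
[:: 76; 321; 427; 534];
[:: 95; 319; 393; 534];
[:: 57; 359; 410; 534];
[:: 171; 249; 291; 537];
[:: 190; 248; 307; 537];
[:: 57; 191; 383; 537];
[:: 19; 59; 253; 537];
[:: 76; 287; 447; 537];
[:: 133; 381; 442; 537];
[:: 0; 116; 346; 537];
[:: 38; 153; 401; 537];
[:: 171; 255; 309; 540];
[:: 190; 251; 316; 540];
[:: 57; 194; 392; 540];
[:: 19; 65; 271; 540];
[:: 76; 293; 420; 540];
[:: 133; 384; 400; 540];
[:: 0; 122; 358; 540];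
[:: 38; 156; 407; 540];
[:: 171; 261; 327; 543];
[:: 190; 254; 325; 543];
[:: 57; 197; 344; 543];
[:: 19; 71; 232; 543];
[:: 76; 299; 450; 543];
[:: 133; 387; 415; 543];
[:: 0; 128; 370; 543];
[:: 38; 159; 413; 543];
[:: 171; 279; 324; 546];
[:: 190; 263; 295; 546];
[:: 57; 206; 371; 546];
[:: 19; 89; 229; 546];
[:: 76; 317; 426; 546];
[:: 133; 396; 403; 546];
[:: 0; 146; 349; 546];
[:: 38; 168; 431; 546];
[:: 171; 240; 321; 549];
[:: 190; 272; 322; 549];
[:: 57; 215; 398; 549];
[:: 19; 107; 283; 549];
[:: 76; 335; 402; 549];
[:: 133; 348; 448; 549];
[:: 0; 164; 385; 549];
[:: 38; 120; 449; 549];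
[:: 171; 246; 339; 552];
[:: 190; 275; 331; 552];
[:: 57; 218; 350; 552];
[:: 19; 113; 244; 552];
[:: 76; 341; 432; 552];
[:: 133; 351; 406; 552];
[:: 0; 170; 397; 552];
[:: 38; 123; 455; 552];
[:: 171; 276; 315; 555];
[:: 190; 233; 319; 555];
[:: 57; 176; 395; 555];
[:: 19; 86; 277; 555];
[:: 76; 314; 411; 555];
[:: 133; 366; 424; 555];
[:: 0; 143; 343; 555];
[:: 38; 138; 428; 555];
[:: 171; 231; 294; 558];
[:: 190; 239; 337; 558];
[:: 57; 182; 356; 558];
[:: 19; 98; 256; 558];
[:: 76; 326; 414; 558];
[:: 133; 372; 454; 558];
[:: 0; 155; 367; 558];
[:: 38; 144; 440; 558];
[:: 171; 243; 330; 561];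
[:: 190; 245; 298; 561];
[:: 57; 188; 374; 561];
[:: 19; 110; 235; 561];
[:: 76; 338; 417; 561];
[:: 133; 378; 427; 561];
[:: 0; 167; 391; 561];
[:: 38; 150; 452; 561];
[:: 228; 306; 348; 564];
[:: 247; 287; 352; 564];
[:: 38; 135; 269; 564];
[:: 76; 116; 289; 564];
[:: 133; 344; 447; 564];
[:: 0; 172; 442; 564];
[:: 19; 96; 212; 564];
[:: 95; 210; 401; 564];
[:: 228; 312; 366; 567];
[:: 247; 293; 382; 567];
[:: 38; 141; 278; 567];
[:: 76; 122; 301; 567];
[:: 133; 350; 420; 567];
[:: 0; 175; 400; 567];
[:: 19; 99; 221; 567];
[:: 95; 213; 407; 567];
[:: 228; 318; 384; 570];
[:: 247; 299; 355; 570];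
[:: 38; 147; 230; 570];
[:: 76; 128; 313; 570];
[:: 133; 356; 450; 570];
[:: 0; 178; 415; 570];
[:: 19; 102; 173; 570];
[:: 95; 216; 413; 570];
[:: 228; 336; 381; 573];
[:: 247; 317; 388; 573];
[:: 38; 165; 257; 573];
[:: 76; 146; 292; 573];
[:: 133; 374; 426; 573];
[:: 0; 187; 403; 573];
[:: 19; 111; 200; 573];
[:: 95; 225; 431; 573];
[:: 228; 297; 378; 576];
[:: 247; 335; 364; 576];
[:: 38; 126; 284; 576];
[:: 76; 164; 328; 576];
[:: 133; 392; 402; 576];
[:: 0; 196; 448; 576];
[:: 19; 63; 227; 576];
[:: 95; 177; 449; 576];
[:: 228; 303; 396; 579];
[:: 247; 341; 394; 579];
[:: 38; 132; 236; 579];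
[:: 76; 170; 340; 579];
[:: 133; 398; 432; 579];
[:: 0; 199; 406; 579];
[:: 19; 66; 179; 579];
[:: 95; 180; 455; 579];
[:: 228; 333; 372; 582];
[:: 247; 314; 373; 582];
[:: 38; 162; 281; 582];
[:: 76; 143; 286; 582];
[:: 133; 371; 411; 582];
[:: 0; 214; 424; 582];
[:: 19; 81; 224; 582];
[:: 95; 195; 428; 582];
[:: 228; 288; 351; 585];
[:: 247; 326; 376; 585];
[:: 38; 117; 242; 585];
[:: 76; 155; 310; 585];
[:: 133; 383; 414; 585];
[:: 0; 220; 454; 585];
[:: 19; 87; 185; 585];
[:: 95; 201; 440; 585];
[:: 228; 300; 387; 588];
[:: 247; 338; 379; 588];
[:: 38; 129; 260; 588];
[:: 76; 167; 334; 588];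
[:: 133; 395; 417; 588];
[:: 0; 226; 427; 588];
[:: 19; 93; 203; 588];
[:: 95; 207; 452; 588];
[:: 0; 324; 384; 591];
[:: 19; 325; 371; 591];
[:: 95; 192; 326; 591];
[:: 133; 173; 346; 591];
[:: 38; 211; 447; 591];
[:: 57; 229; 403; 591];
[:: 76; 135; 257; 591];
[:: 152; 267; 401; 591];
[:: 0; 327; 396; 594];
[:: 19; 331; 344; 594];
[:: 95; 198; 335; 594];
[:: 133; 179; 358; 594];
[:: 38; 217; 420; 594];
[:: 57; 232; 415; 594];
[:: 76; 141; 230; 594];
[:: 152; 270; 407; 594];
[:: 0; 330; 351; 597];
[:: 19; 337; 374; 597];
[:: 95; 204; 287; 597];
[:: 133; 185; 370; 597];
[:: 38; 223; 450; 597];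
[:: 57; 235; 427; 597];
[:: 76; 147; 260; 597];
[:: 152; 273; 413; 597];
[:: 0; 339; 387; 600];
[:: 19; 298; 350; 600];
[:: 95; 222; 314; 600];
[:: 133; 203; 349; 600];
[:: 38; 184; 426; 600];
[:: 57; 244; 406; 600];
[:: 76; 165; 236; 600];
[:: 152; 282; 431; 600];
[:: 0; 291; 366; 603];
[:: 19; 316; 383; 603];
[:: 95; 183; 341; 603];
[:: 133; 221; 385; 603];
[:: 38; 202; 402; 603];
[:: 57; 253; 442; 603];
[:: 76; 126; 269; 603];
[:: 152; 234; 449; 603];
[:: 0; 294; 378; 606];
[:: 19; 322; 356; 606];
[:: 95; 189; 293; 606];
[:: 133; 227; 397; 606];
[:: 38; 208; 432; 606];
[:: 57; 256; 454; 606];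
[:: 76; 132; 242; 606];
[:: 152; 237; 455; 606];
[:: 0; 309; 381; 609];
[:: 19; 295; 392; 609];
[:: 95; 219; 338; 609];
[:: 133; 200; 343; 609];
[:: 38; 181; 411; 609];
[:: 57; 271; 400; 609];
[:: 76; 162; 278; 609];
[:: 152; 252; 428; 609];
[:: 0; 315; 348; 612];
[:: 19; 307; 395; 612];
[:: 95; 174; 299; 612];
[:: 133; 212; 367; 612];
[:: 38; 193; 414; 612];
[:: 57; 277; 424; 612];
[:: 76; 117; 281; 612];
[:: 152; 258; 440; 612];
[:: 0; 321; 372; 615];
[:: 19; 319; 398; 615];
[:: 95; 186; 317; 615];
[:: 133; 224; 391; 615];
[:: 38; 205; 417; 615];
[:: 57; 283; 448; 615];
[:: 76; 129; 284; 615];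
[:: 152; 264; 452; 615];
[:: 0; 78; 345; 618];
[:: 38; 97; 352; 618];
[:: 152; 249; 371; 618];
[:: 19; 211; 257; 618];
[:: 95; 268; 447; 618];
[:: 114; 286; 421; 618];
[:: 133; 192; 314; 618];
[:: 209; 306; 428; 618];
[:: 0; 84; 354; 621];
[:: 38; 103; 382; 621];
[:: 152; 255; 344; 621];
[:: 19; 217; 230; 621];
[:: 95; 274; 420; 621];
[:: 114; 289; 430; 621];
[:: 133; 198; 287; 621];
[:: 209; 312; 401; 621];
[:: 0; 90; 363; 624];
[:: 38; 109; 355; 624];
[:: 152; 261; 374; 624];
[:: 19; 223; 260; 624];
[:: 95; 280; 450; 624];
[:: 114; 292; 439; 624];
[:: 133; 204; 317; 624];
[:: 209; 318; 431; 624];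
[:: 0; 108; 390; 627];
[:: 38; 70; 388; 627];
[:: 152; 279; 350; 627];
[:: 19; 184; 236; 627];
[:: 95; 241; 426; 627];
[:: 114; 301; 409; 627];
[:: 133; 222; 293; 627];
[:: 209; 336; 407; 627];
[:: 0; 69; 360; 630];
[:: 38; 88; 364; 630];
[:: 152; 240; 383; 630];
[:: 19; 202; 269; 630];
[:: 95; 259; 402; 630];
[:: 114; 310; 436; 630];
[:: 133; 183; 326; 630];
[:: 209; 297; 440; 630];
[:: 0; 75; 369; 633];
[:: 38; 94; 394; 633];
[:: 152; 246; 356; 633];
[:: 19; 208; 242; 633];
[:: 95; 265; 432; 633];
[:: 114; 313; 445; 633];
[:: 133; 189; 299; 633];
[:: 209; 303; 413; 633];
[:: 0; 105; 357; 636];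
[:: 38; 67; 373; 636];
[:: 152; 276; 392; 636];
[:: 19; 181; 278; 636];
[:: 95; 238; 411; 636];
[:: 114; 328; 433; 636];
[:: 133; 219; 335; 636];
[:: 209; 333; 449; 636];
[:: 0; 60; 375; 639];
[:: 38; 79; 376; 639];
[:: 152; 231; 395; 639];
[:: 19; 193; 281; 639];
[:: 95; 250; 414; 639];
[:: 114; 334; 451; 639];
[:: 133; 174; 338; 639];
[:: 209; 288; 452; 639];
[:: 0; 72; 393; 642];
[:: 38; 91; 379; 642];
[:: 152; 243; 398; 642];
[:: 19; 205; 284; 642];
[:: 95; 262; 417; 642];
[:: 114; 340; 412; 642];
[:: 133; 186; 341; 642];
[:: 209; 300; 455; 642];
[:: 95; 152; 342; 645];
[:: 133; 361; 399; 645];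
[:: 38; 76; 190; 645];
[:: 0; 57; 380; 645];
[:: 19; 323; 437; 645];
[:: 209; 228; 304; 645];
[:: 247; 285; 418; 645];
[:: 114; 171; 266; 645];
[:: 57; 209; 399; 648];
[:: 190; 342; 418; 648];
[:: 228; 380; 437; 648];
[:: 95; 171; 285; 648];
[:: 76; 152; 266; 648];
[:: 0; 323; 361; 648];
[:: 19; 133; 304; 648];
[:: 38; 114; 247; 648];
[:: 57; 152; 285; 437];
[:: 0; 76; 247; 437];
[:: 0; 152; 190; 399];
[:: 57; 266; 323; 342];
[:: 0; 171; 228; 342];
[:: 114; 190; 323; 380]].

Lemma c65_1 : chk1 65 bb65. Proof. by vm_compute. Qed.
Lemma c65_2 : chk2 65 bb65. Proof. by vm_compute. Qed.
Lemma c65_3 : chk3 65. Proof. by vm_compute. Qed.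
Lemma ex195 : exists (V : finType) (G B : {set {set V}}), is_4GDD G B /\ has_type G (nseq 8 57 ++ [:: 195]).
Proof. exact: (gen c65_1 c65_2 c65_3). Qed.

Theorem lemma2p4 :
  forall m : nat, m \in [:: 174; 177; 180; 183; 186; 189; 192; 195] ->
  exists (V : finType) (G B : {set {set V}}),
    is_4GDD G B /\ has_type G (nseq 8 57 ++ [:: m]).
Proof.
move=> m; rewrite !inE.
case/orP => [/eqP -> | ]; first exact: ex174.
case/orP => [/eqP -> | ]; first exact: ex177.
case/orP => [/eqP -> | ]; first exact: ex180.
case/orP => [/eqP -> | ]; first exact: ex183.
case/orP => [/eqP -> | ]; first exact: ex186.
case/orP => [/eqP -> | ]; first exact: ex189.
case/orP => [/eqP -> | ]; first exact: ex192.
move/eqP => ->; exact: ex195.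
Qed.
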